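(* There exist $R>0$ and $\upsilon\in(0,1)$, independent of $t$, such that for every $t>0$ there is a closed, real, positive $(1,1)$-form $\check\omega_t$ on $\tilde X$ satisfying: (1) $\check\omega_t=\tilde\omega_t$ on $\{p\in\tilde X: r(p)\le tR/2\}$; (2) $\check\omega_t=\hat\omega$ on a neighbourhood of $\{p\in\tilde X: r(p)\ge tR\}$; (3) $\check\omega_t^2\ge 2\upsilon^2\,\mathrm{vol}_0$ on $\tilde X\setminus\mathfrak{E}$, with equality holding at least on $\{p: r(p)=\mathfrak{r}_t\}$ for some $\mathfrak{r}_t\in(tR/2,tR)$.
   Context: Let $\tilde X=\{((U^1,U^2),[W^1:W^2])\in\mathbb{C}^2\times\mathbb{CP}^1: U^1(W^2)^2=U^2(W^1)^2\}\cong T^*\mathbb{CP}^1$, a complex surface, with the blow-down map $\rho:\tilde X\to\mathbb{C}^2/\{\pm1\}$, $((U^1,U^2),[W^1:W^2])\mapsto\pm(\sqrt{U^1},\sqrt{U^2})$ (square roots chosen with $\sqrt{U^1}W^2=\sqrt{U^2}W^1$); $\mathfrak{E}=\rho^{-1}(0)\cong\mathbb{CP}^1$, and $\rho$ identifies $\tilde X\setminus\mathfrak E$ biholomorphically with $(\mathbb{C}^2/\{\pm1\})\setminus\{0\}$. On $\mathbb{C}^2$ with coordinates $w^1=x^1+iy^1$, $w^2=x^2+iy^2$, put $r^2=|w^1|^2+|w^2|^2$ (pulled back to $\tilde X$ via $\rho$, with $r=0$ on $\mathfrak E$), $\hat\omega=\frac i2(dw^1\wedge d\bar w^1+dw^2\wedge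 d\bar w^2)$, $\mathrm{vol}_0=dx^1\wedge dy^1\wedge dx^2\wedge dy^2$. The Eguchi--Hanson forms are $\tilde\omega_t=\frac14dd^c\big[\sqrt{r^4+t^4}+t^2\log\big(\frac{r^2}{\sqrt{r^4+t^4}+t^2}\big)\big]$ on $\tilde X\setminus\mathfrak E$, where $d^c=i(\bar\partial-\partial)$; each $\tilde\omega_t$ ($t>0$) extends smoothly over $\mathfrak E$ to a Ricci-flat Kähler form on $\tilde X$. *)

(* Defs.v *)
From Stdlib Require Import Reals.
From Coquelicot Require Import Coquelicot.
Open Scope R_scope.

Definition C2 := (C * C)%type.
Definition zero2 : C2 := (RtoC 0, RtoC 0).
Definition nonzero2 (w : C2) : Prop := w <> zero2.
Definition C2neg (w : C2) : C2 := (Copp (fst w), Copp (snd w)).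

(** r = sqrt(|w1|^2+|w2|^2). Via the blow-down rho, points of X~ \ E are the
    points w <> 0 of C^2 modulo w ~ -w; r = 0 exactly on E. *)
Definition r_of (w : C2) : R := sqrt (Cmod (fst w) ^ 2 + Cmod (snd w) ^ 2).
Definition dist2 (w w' : C2) : R :=
  r_of (Cminus (fst w) (fst w'), Cminus (snd w) (snd w')).

Definition is_open2 (V : C2 -> Prop) : Prop :=
  forall w, V w -> exists d, 0 < d /\ forall w', dist2 w' w < d -> V w'.

Definition shift (k : nat) (s : R) (w : C2) : C2 :=
  match w with ((x1, y1), (x2, y2)) =>
  match k with
  | O => ((x1 + s, y1), (x2, y2))
  | 1%nat => ((x1, y1 + s), (x2, y2))
  | 2%nat => ((x1, y1), (x2 + s, y2))
  | _ => ((x1, y1), (x2, y2 + s))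
  end end.

Definition rdiff_at (k : nat) (f : C2 -> R) (w : C2) : Prop :=
  ex_derive (fun s => f (shift k s w)) 0.
Definition rpartial (k : nat) (f : C2 -> R) (w : C2) : R :=
  Derive (fun s => f (shift k s w)) 0.

Definition cont_on (V : C2 -> Prop) (f : C2 -> R) : Prop :=
  forall w, V w -> forall eps, 0 < eps -> exists d, 0 < d /\
    forall w', V w' -> dist2 w' w < d -> Rabs (f w' - f w) < eps.

Fixpoint Ck (n : nat) (V : C2 -> Prop) (f : C2 -> R) : Prop :=
  match n with
  | O => cont_on V f
  | S m => cont_on V f /\
      forall k, (k < 4)%nat ->
        (forall w, V w -> rdiff_at k f w) /\ Ck m V (rpartial k f)
  end.
Definition smooth_on (V : C2 -> Prop) (f : C2 -> R) : Prop := forall n, Ck n V f.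
Definition smoothC_on (V : C2 -> Prop) (f : C2 -> C) : Prop :=
  smooth_on V (fun w => Re (f w)) /\ smooth_on V (fun w => Im (f w)).

(** Real partials of complex-valued functions and Wirtinger derivatives
    d/dw_j = (d/dx_j - i d/dy_j)/2, d/dwbar_j = (d/dx_j + i d/dy_j)/2. *)
Definition cpartial (k : nat) (f : C2 -> C) (w : C2) : C :=
  (rpartial k (fun p => Re (f p)) w, rpartial k (fun p => Im (f p)) w).
Definition dW (j : nat) (f : C2 -> C) (w : C2) : C :=
  Cmult (RtoC (/2)) (Cminus (cpartial (2 * j) f w) (Cmult Ci (cpartial (2 * j + 1) f w))).
Definition dWbar (j : nat) (f : C2 -> C) (w : C2) : C :=
  Cmult (RtoC (/2)) (Cplus (cpartial (2 * j) f w) (Cmult Ci (cpartial (2 * j + 1) f w))).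

(** A (1,1)-form  omega = (i/2) sum_{j,k} h_{j kbar} dw^j /\ dwbar^k  on
    (an open subset of) X~ \ E, written in the w-coordinates: indices 0,1. *)
Definition mat2 := nat -> nat -> C.
Definition form11 := C2 -> mat2.

Definition hermitian (M : mat2) : Prop :=
  forall j k, (j < 2)%nat -> (k < 2)%nat -> M k j = Cconj (M j k).

Definition quad (M : mat2) (v0 v1 : C) : C :=
  Cplus (Cplus (Cmult (Cmult v0 (M 0%nat 0%nat)) (Cconj v0))
               (Cmult (Cmult v0 (M 0%nat 1%nat)) (Cconj v1)))
        (Cplus (Cmult (Cmult v1 (M 1%nat 0%nat)) (Cconj v0))
               (Cmult (Cmult v1 (M 1%nat 1%nat)) (Cconj v1))).
Definition posdef (M : mat2) : Prop :=
  forall v0 v1, (v0, v1) <> zero2 -> 0 < Re (quad M v0 v1).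

(** Pullback of coefficients under a holomorphic map with Jacobian J
    (J j a = d w^j / d zeta^a):  G_{a bbar} = sum_{j,k} J_{ja} h_{j kbar} conj(J_{kb}). *)
Definition pullback (J : mat2) (M : mat2) : mat2 := fun a b =>
  Cplus (Cplus (Cmult (Cmult (J 0%nat a) (M 0%nat 0%nat)) (Cconj (J 0%nat b)))
               (Cmult (Cmult (J 0%nat a) (M 0%nat 1%nat)) (Cconj (J 1%nat b))))
        (Cplus (Cmult (Cmult (J 1%nat a) (M 1%nat 0%nat)) (Cconj (J 0%nat b)))
               (Cmult (Cmult (J 1%nat a) (M 1%nat 1%nat)) (Cconj (J 1%nat b)))).

(** The two standard holomorphic charts of X~, with coordinates zeta = (z,u):
    chart 1 (W^1 <> 0): [W] = [1:z], U^1 = u, U^2 = u z^2;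
    chart 2 (W^2 <> 0): [W] = [z:1], U^2 = u, U^1 = u z^2.
    For u = s^2 <> 0, rho(z,u) = +-(s, z s) (chart 1), +-(z s, s) (chart 2);
    u = 0 is E. [chart_pt c z s] is the point w and [chart_jac c z s] the
    Jacobian d w / d(z,u) of the local inverse branch w(z,u). *)
Definition chart_pt (c : bool) (z s : C) : C2 :=
  if c then (s, Cmult z s) else (Cmult z s, s).
Definition chart_jac (c : bool) (z s : C) : mat2 := fun j a =>
  let inv2s := Cinv (Cmult (RtoC 2) s) in
  match c, j, a with
  | true, O, O => RtoC 0
  | true, O, _ => inv2s
  | true, _, O => s
  | true, _, _ => Cmult z inv2s
  | false, O, O => s
  | false, O, _ => Cmult z inv2s
  | false, _, O => RtoC 0
  | false, _, _ => inv2s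
  end.

Definition extends_pos_over_E (h : form11) : Prop :=
  forall c : bool, exists G : C2 -> mat2,
    (forall a b, (a < 2)%nat -> (b < 2)%nat ->
       smoothC_on (fun _ => True) (fun p => G p a b)) /\
    (forall z s, s <> RtoC 0 -> forall a b, (a < 2)%nat -> (b < 2)%nat ->
       G (z, Cmult s s) a b = pullback (chart_jac c z s) (h (chart_pt c z s)) a b) /\
    (forall z, posdef (G (z, RtoC 0))).

(** A closed, real, positive (1,1)-form on X~, represented by its coefficients
    in the w-coordinates on X~ \ E = (C^2 \ {0})/{+-1}. *)
Definition closed_real_pos_11_form (h : form11) : Prop :=
  (* well defined on the quotient by +-1 *)
  (forall w, nonzero2 w -> forall j k, (j < 2)%nat -> (k < 2)%nat ->
     h (C2neg w) j k = h w j k) /\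
  (forall j k, (j < 2)%nat -> (k < 2)%nat -> smoothC_on nonzero2 (fun w => h w j k)) /\
  (* real *)
  (forall w, nonzero2 w -> hermitian (h w)) /\
  (* closed: d omega = 0 on X~ \ E (hence on X~ by continuity) *)
  (forall w, nonzero2 w -> forall j k l, (j < 2)%nat -> (k < 2)%nat -> (l < 2)%nat ->
     dW l (fun p => h p j k) w = dW j (fun p => h p l k) w /\
     dWbar l (fun p => h p j k) w = dWbar k (fun p => h p j l) w) /\
  (forall w, nonzero2 w -> posdef (h w)) /\
  extends_pos_over_E h.

Definition form_eq_at (h h' : form11) (w : C2) : Prop :=
  forall j k, (j < 2)%nat -> (k < 2)%nat -> h w j k = h' w j k.

Definition omega_hat : form11 := fun _ j k => if Nat.eqb j k then RtoC 1 else RtoC 0.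

(** Eguchi--Hanson potential and tilde omega_t = (1/4) dd^c phi_t = (i/2) d dbar phi_t,
    i.e. h_{j kbar} = d^2 phi_t / dw_j dwbar_k. *)
Definition EH_potential (t : R) (w : C2) : R :=
  let r := r_of w in
  sqrt (r ^ 4 + t ^ 4) + t ^ 2 * ln (r ^ 2 / (sqrt (r ^ 4 + t ^ 4) + t ^ 2)).
Definition omega_tilde (t : R) : form11 := fun w j k =>
  dW j (dWbar k (fun p => RtoC (EH_potential t p))) w.

(** omega /\ omega = wedge_sq_coeff omega * vol_0, where for
    omega = (i/2) sum h_{j kbar} dw^j /\ dwbar^k one has omega^2 = 2 det(h) vol_0. *)
Definition wedge_sq_coeff (h : form11) (w : C2) : R :=
  2 * Re (Cminus (Cmult (h w 0%nat 0%nat) (h w 1%nat 1%nat))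
                 (Cmult (h w 0%nat 1%nat) (h w 1%nat 0%nat))).

(* Main.v *)
Require Import Defs.
From Stdlib Require Import Reals Lra Lia.
From Coquelicot Require Import Coquelicot.
Open Scope R_scope.

Lemma ballR (x e y : R) : ball x e y <-> Rabs (y - x) < e.
Proof. reflexivity. Qed.

Lemma locally_R (x : R) (P : R -> Prop) :
  (exists d, 0 < d /\ forall y, Rabs (y - x) < d -> P y) -> locally x P.
Proof. intros [d [Hd H]]. exists (mkposreal d Hd). intros y Hy. apply H. exact Hy. Qed.

Lemma exp_pow_nat (n : nat) (v : R) : exp (INR n * v) = exp v ^ n.
Proof.
  induction n. simpl. rewrite Rmult_0_l. apply exp_0.
  rewrite S_INR. replace ((INR n + 1) * v) with (INR n * v + v) by ring.
  rewrite exp_plus, IHn. simpl. ring.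
Qed.

Lemma exp_ge_pow (N : nat) (u : R) : (0 < N)%nat -> 0 <= u -> (u / INR N) ^ N <= exp u.
Proof.
  intros HN Hu.
  assert (HN' : 0 < INR N) by (apply lt_0_INR; lia).
  replace u with (INR N * (u / INR N)) at 2 by (field; lra).
  rewrite exp_pow_nat. apply pow_incr. split.
  apply Rdiv_le_0_compat; lra.
  destruct (Req_dec (u / INR N) 0) as [E|E]. rewrite E, exp_0. lra.
  generalize (exp_ineq1 _ E). lra.
Qed.

Definition fn (n : nat) (y : R) : R := if Rlt_dec 0 y then exp (- / y) / y ^ n else 0.

Lemma fn_nonneg n y : 0 <= fn n y.
Proof. unfold fn. destruct Rlt_dec. apply Rdiv_le_0_compat. left; apply exp_pos. apply pow_lt; lra. lra. Qed.

Lemma fn_pos n y : 0 < y -> 0 < fn n y.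
Proof. intro. unfold fn. destruct Rlt_dec. apply Rdiv_lt_0_compat. apply exp_pos. apply pow_lt; lra. lra. Qed.

Lemma fn_nonpos n y : y <= 0 -> fn n y = 0.
Proof. intro. unfold fn. destruct Rlt_dec. lra. reflexivity. Qed.

Lemma fn_bound (m : nat) (y : R) : 0 < y ->
  exp (- / y) / y ^ m <= INR (S m) ^ (S m) * y.
Proof.
  intro Hy. set (u := / y). assert (Hu : 0 < u) by (apply Rinv_0_lt_compat; lra).
  assert (Hyu : y = / u) by (unfold u; rewrite Rinv_inv; reflexivity).
  set (N := S m). assert (HN : 0 < INR N) by (apply lt_0_INR; unfold N; lia).
  generalize (exp_ge_pow N u ltac:(unfold N; lia) ltac:(lra)). intro He.
  rewrite exp_Ropp. rewrite Hyu.
  assert (Hp : 0 < (u / INR N) ^ N) by (apply pow_lt; apply Rdiv_lt_0_compat; lra).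
  assert (Hexp : 0 < exp u) by apply exp_pos.
  rewrite pow_inv.
  replace (/ exp u / / u ^ m) with (u ^ m / exp u) by (field; split; [apply pow_nonzero; lra | lra]).
  apply Rle_trans with (u ^ m / (u / INR N) ^ N).
  apply Rmult_le_compat_l. apply pow_le; lra.
  apply Rinv_le_contravar; lra.
  unfold Rdiv at 2. rewrite Rpow_mult_distr, pow_inv.
  assert (HuN : u ^ N = u * u ^ m) by reflexivity. rewrite HuN.
  assert (HK : INR N ^ N <> 0) by (apply pow_nonzero; lra).
  set (K := INR N ^ N) in *. 
  right. field. repeat split; try lra; try (apply pow_nonzero; lra).
Qed.

Lemma isd_eq (f : R -> R) x l l' : is_derive f x l -> l = l' -> is_derive f x l'.
Proof. intros H ->; exact H. Qed.
Lemma isd_comp (f g : R -> R) x df dg : is_derive f (g x) df -> is_derive g x dg ->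
  is_derive (fun y => f (g y)) x (dg * df).
Proof. intros. apply (is_derive_comp f g x df dg); auto. Qed.
Lemma isd_mult (f g : R -> R) x df dg : is_derive f x df -> is_derive g x dg ->
  is_derive (fun y => f y * g y) x (df * g x + f x * dg).
Proof. intros. apply (is_derive_mult f g x df dg); auto. intros; apply Rmult_comm. Qed.
Lemma isd_plus (f g : R -> R) x df dg : is_derive f x df -> is_derive g x dg ->
  is_derive (fun y => f y + g y) x (df + dg).
Proof. intros. apply (is_derive_plus f g x df dg); auto. Qed.
Lemma isd_const (c x : R) : is_derive (fun _ => c) x 0.
Proof. apply (is_derive_const c x). Qed.
Lemma isd_id (x : R) : is_derive (fun y => y) x 1.
Proof. apply (is_derive_id x). Qed.
Lemma isd_inv (f : R -> R) x l : is_derive f x l -> f x <> 0 ->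
  is_derive (fun y => / f y) x (- l / (f x * f x)).
Proof. intros. eapply isd_eq. apply is_derive_inv; eauto. simpl. field. auto. Qed.
Lemma isd_sqrt (f : R -> R) x l : is_derive f x l -> 0 < f x ->
  is_derive (fun y => sqrt (f y)) x (l / (2 * sqrt (f x))).
Proof. intros. apply (is_derive_sqrt f x l); auto. Qed.
Lemma isd_exp (f : R -> R) x l : is_derive f x l -> is_derive (fun y => exp (f y)) x (l * exp (f x)).
Proof. intros. apply (isd_comp exp f x); auto. apply is_derive_exp. Qed.

Lemma isd_opp (f : R -> R) x l : is_derive f x l -> is_derive (fun y => - f y) x (- l).
Proof. intros. apply (is_derive_opp f x l); auto. Qed.
Lemma isd_pow (f : R -> R) n x l : is_derive f x l ->
  is_derive (fun y => f y ^ n) x (INR n * l * f x ^ pred n).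
Proof. intros. apply (is_derive_pow f n x l); auto. Qed.

Definition fnd (n : nat) (y : R) : R := fn (n + 2) y - INR n * fn (S n) y.

Lemma is_derive_fn (n : nat) (y : R) : is_derive (fn n) y (fnd n y).
Proof.
  destruct (Rlt_dec 0 y) as [Hy|Hy].
  - apply is_derive_ext_loc with (f := fun x => exp (- / x) * (/ x) ^ n).
    { apply locally_R. exists y. split. lra. intros x Hx.
      assert (0 < x) by (apply Rabs_def2 in Hx; lra).
      unfold fn. destruct Rlt_dec. rewrite pow_inv. reflexivity. lra. }
    eapply isd_eq. apply isd_mult.
    apply isd_exp. apply isd_opp. apply isd_inv. apply isd_id. lra.
    apply isd_pow. apply isd_inv. apply isd_id. lra.
    unfold fnd, fn. destruct Rlt_dec; [|lra].
    destruct n as [|n].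
    + simpl. field. lra.
    + replace (S n + 2)%nat with (S (S (S n))) by lia. simpl pred.
      rewrite !pow_inv. generalize (INR (S n)); intro m.
      simpl. field. repeat split; try lra; apply pow_nonzero; lra.
  - apply Rnot_lt_le in Hy. destruct Hy as [Hy|Hy].
    + apply is_derive_ext_loc with (f := fun _ => 0).
      { apply locally_R. exists (- y). split. lra. intros x Hx.
        apply Rabs_def2 in Hx. rewrite fn_nonpos. reflexivity. lra. }
      eapply isd_eq. apply isd_const. unfold fnd. rewrite !fn_nonpos by lra. simpl; ring.
    + subst y. apply is_derive_Reals. unfold fnd. rewrite !fn_nonpos by lra.
      intros eps Heps.
      set (K := INR (S (S n)) ^ (S (S n))).
      assert (HK : 0 < K) by (apply pow_lt; apply lt_0_INR; lia).
      assert (Hd : 0 < eps / K) by (apply Rdiv_lt_0_compat; lra).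
      exists (mkposreal _ Hd). intros h Hh Hab. simpl in Hab.
      rewrite Rplus_0_l, (fn_nonpos n 0) by lra.
      destruct (Rlt_dec 0 h) as [Hp|Hp].
      * unfold fn. destruct Rlt_dec; [|lra].
        generalize (fn_bound (S n) h Hp). intro Hb. fold K in Hb.
        assert (E : (exp (- / h) / h ^ n - 0) / h - (0 - INR n * 0) = exp (- / h) / h ^ S n)
          by (simpl; field; split; [apply pow_nonzero; lra | lra]).
        rewrite E. rewrite Rabs_pos_eq.
        apply Rle_lt_trans with (K * h). exact Hb.
        rewrite Rabs_pos_eq in Hab by lra.
        apply Rmult_lt_reg_l with (/ K). apply Rinv_0_lt_compat; lra.
        replace (/ K * (K * h)) with h by (field; lra).
        replace (/ K * eps) with (eps / K) by (unfold Rdiv; ring). exact Hab.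
        apply Rdiv_le_0_compat. left; apply exp_pos. apply pow_lt; lra.
      * rewrite fn_nonpos by lra.
        replace ((0 - 0) / h - (0 - INR n * 0)) with 0 by (field; lra).
        rewrite Rabs_R0; lra.
Qed.

Inductive Lc : R -> (R -> R) -> Prop :=
| Lc_const a c : Lc a (fun _ => c)
| Lc_id a : Lc a (fun y => y)
| Lc_fn a n al be : Lc a (fun y => fn n (al * y + be))
| Lc_plus a f g : Lc a f -> Lc a g -> Lc a (fun y => f y + g y)
| Lc_mult a f g : Lc a f -> Lc a g -> Lc a (fun y => f y * g y)
| Lc_comp a a' g h : Lc a' g -> Lc a h -> (forall y, a < y -> a' < h y) ->
    Lc a (fun y => g (h y))
| Lc_inv a h : Lc a h -> (forall y, a < y -> 0 < h y) -> Lc a (fun y => / h y)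
| Lc_sqrt a h : Lc a h -> (forall y, a < y -> 0 < h y) -> Lc a (fun y => sqrt (h y))
| Lc_ext a f g : Lc a f -> (forall y, a < y -> f y = g y) -> Lc a g.

Lemma locally_gt (a y : R) : a < y -> locally y (fun x => a < x).
Proof. intro. apply locally_R. exists (y - a). split. lra. intros x Hx. apply Rabs_def2 in Hx. lra. Qed.

Lemma Lc_deriv a f : Lc a f -> exists f', Lc a f' /\ forall y, a < y -> is_derive f y (f' y).
Proof.
  induction 1.
  - exists (fun _ => 0). split. constructor. intros; apply isd_const.
  - exists (fun _ => 1). split. constructor. intros; apply isd_id.
  - exists (fun y => al * (fn (n + 2) (al * y + be) + (- INR n) * fn (S n) (al * y + be))).
    split. apply Lc_mult. constructor. apply Lc_plus. constructor. apply Lc_mult. constructor. constructor.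
    intros y _. eapply isd_eq. apply (isd_comp (fn n) (fun y => al * y + be)).
    apply is_derive_fn. eapply isd_eq. apply isd_plus. apply (isd_mult (fun _ => al) (fun y => y)).
    apply isd_const. apply isd_id. apply isd_const. reflexivity.
    unfold fnd. simpl. ring.
  - destruct IHLc1 as [f' [Lf1 D1]]. destruct IHLc2 as [g' [Lg2 D2]].
    exists (fun y => f' y + g' y). split. constructor; auto. intros. apply isd_plus; auto.
  - destruct IHLc1 as [f' [Lf1 D1]]. destruct IHLc2 as [g' [Lg2 D2]].
    exists (fun y => f' y * g y + f y * g' y). split.
    apply Lc_plus; apply Lc_mult; auto. intros. apply isd_mult; auto.
  - destruct IHLc1 as [g' [Lg1 D1]]. destruct IHLc2 as [h' [Lh2 D2]].
    exists (fun y => h' y * g' (h y)). split. apply Lc_mult; auto. apply Lc_comp with a'; auto.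
    intros. apply isd_comp; auto.
  - destruct IHLc as [h' [Lh1 D1]].
    exists (fun y => (- 1) * h' y * (/ h y * / h y)). split.
    apply Lc_mult. apply Lc_mult; auto. constructor. apply Lc_mult; apply Lc_inv; auto.
    intros y Hy. eapply isd_eq. apply isd_inv; auto. specialize (H0 y Hy); lra.
    specialize (H0 y Hy). simpl. field. lra.
  - destruct IHLc as [h' [Lh1 D1]].
    exists (fun y => h' y * (/ 2 * / sqrt (h y))). split.
    apply Lc_mult; auto. apply Lc_mult. constructor. apply Lc_inv. apply Lc_sqrt; auto.
    intros. apply sqrt_lt_R0; auto.
    intros y Hy. eapply isd_eq. apply isd_sqrt; auto.
    specialize (H0 y Hy). assert (0 < sqrt (h y)) by (apply sqrt_lt_R0; auto). simpl. field. lra.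
  - destruct IHLc as [f' [Lf1 D1]]. exists f'. split; auto.
    intros y Hy. apply is_derive_ext_loc with f. 2: auto.
    generalize (locally_gt a y Hy). apply filter_imp. intros; auto.
Qed.

Lemma Lc_cont a f y : Lc a f -> a < y -> continuous f y.
Proof.
  intros H Hy. destruct (Lc_deriv a f H) as [f' [_ D]].
  apply (ex_derive_continuous (K := R_AbsRing) (V := R_NormedModule) f y). exists (f' y). auto.
Qed.

Lemma Lc_cont_eps a f y : Lc a f -> a < y -> forall eps, 0 < eps ->
  exists d, 0 < d /\ forall y', Rabs (y' - y) < d -> Rabs (f y' - f y) < eps.
Proof.
  intros H Hy eps He. generalize (Lc_cont a f y H Hy). intro C.
  assert (C' := proj1 (filterlim_locally (F := locally y) f (f y)) C).
  destruct (C' (mkposreal eps He)) as [d Hd]. exists d. split. apply cond_pos.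
  intros y' Hy'. apply (Hd y' Hy').
Qed.

Definition co (i : nat) (w : C2) : R :=
  match i with
  | O => fst (fst w) | 1%nat => snd (fst w) | 2%nat => fst (snd w) | _ => snd (snd w) end.

Inductive Good (V : C2 -> Prop) : (C2 -> R) -> Prop :=
| G_co i : Good V (co i)
| G_const c : Good V (fun _ => c)
| G_plus f g : Good V f -> Good V g -> Good V (fun w => f w + g w)
| G_mult f g : Good V f -> Good V g -> Good V (fun w => f w * g w)
| G_comp a g q : Lc a g -> Good V q -> (forall w, V w -> a < q w) -> Good V (fun w => g (q w)).

Lemma shift0 k w : shift k 0 w = w.
Proof. destruct w as [[x1 y1] [x2 y2]]. destruct k as [|[|[|]]]; simpl; rewrite Rplus_0_r; reflexivity. Qed.

Lemma co_deriv i k w : (k < 4)%nat ->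
  is_derive (fun s0 => co i (shift k s0 w)) 0 (if Nat.eqb (Nat.min i 3) k then 1 else 0).
Proof.
  intro Hk. destruct w as [[x1 y1] [x2 y2]].
  destruct k as [|[|[|[|k]]]]; try lia; destruct i as [|[|[|[|i]]]]; cbn;
  first [ apply isd_const
        | eapply isd_eq; [apply isd_plus; [apply isd_const | apply isd_id] | simpl; ring] ].
Qed.

Lemma Good_deriv V f : Good V f -> forall k, (k < 4)%nat ->
  exists f', Good V f' /\ forall w, V w -> is_derive (fun s0 => f (shift k s0 w)) 0 (f' w).
Proof.
  induction 1; intros k Hk.
  - exists (fun _ => if Nat.eqb (Nat.min i 3) k then 1 else 0). split. constructor.
    intros. apply co_deriv; auto.
  - exists (fun _ => 0). split. constructor. intros. apply isd_const.
  - destruct (IHGood1 k Hk) as [f' [Gf Df]]. destruct (IHGood2 k Hk) as [g' [Gg Dg]].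
    exists (fun w => f' w + g' w). split. constructor; auto. intros. apply isd_plus; auto.
  - destruct (IHGood1 k Hk) as [f' [Gf Df]]. destruct (IHGood2 k Hk) as [g' [Gg Dg]].
    exists (fun w => f' w * g w + f w * g' w). split. apply G_plus; apply G_mult; auto.
    intros w Hw. eapply isd_eq. apply isd_mult; auto. cbv beta. rewrite !shift0. reflexivity.
  - destruct (IHGood k Hk) as [q' [Gq Dq]]. destruct (Lc_deriv a g H) as [g' [Lg Dg]].
    exists (fun w => q' w * g' (q w)). split. apply G_mult; auto. apply G_comp with a; auto.
    intros w Hw. eapply isd_eq. apply (isd_comp g (fun s0 => q (shift k s0 w))); auto.
    rewrite shift0. apply Dg; auto. reflexivity.
Qed.

Definition cont_at (V : C2 -> Prop) (f : C2 -> R) (w : C2) : Prop :=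
  forall eps, 0 < eps -> exists d, 0 < d /\
    forall w', V w' -> dist2 w' w < d -> Rabs (f w' - f w) < eps.

Definition s2 (w : C2) : R :=
  co 0 w * co 0 w + co 1 w * co 1 w + co 2 w * co 2 w + co 3 w * co 3 w.

Lemma r_of_s2 w : r_of w = sqrt (s2 w).
Proof.
  destruct w as [[x1 y1] [x2 y2]]. unfold r_of, Cmod. cbn [fst snd].
  rewrite !pow2_sqrt by (apply Rplus_le_le_0_compat; apply pow2_ge_0).
  f_equal. unfold s2, co; simpl. ring.
Qed.

Lemma s2_nonneg w : 0 <= s2 w.
Proof. unfold s2. nra. Qed.

Lemma co_dist i w w' : Rabs (co i w' - co i w) <= dist2 w' w.
Proof.
  unfold dist2. rewrite r_of_s2.
  rewrite <- sqrt_Rsqr_abs. apply sqrt_le_1_alt. unfold Rsqr.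
  destruct w as [[x1 y1] [x2 y2]]. destruct w' as [[a1 b1] [a2 b2]].
  unfold s2, co, Cminus, Cplus, Copp; simpl.
  generalize (Rle_0_sqr (a1 + - x1)) (Rle_0_sqr (b1 + - y1)) (Rle_0_sqr (a2 + - x2)) (Rle_0_sqr (b2 + - y2)); unfold Rsqr, Rminus.
  destruct i as [|[|[|[|i]]]]; simpl; lra.
Qed.

Lemma mult_cont_lemma (a a0 b b0 eps : R) : 0 < eps ->
  Rabs (a - a0) < Rmin 1 (eps / (2 + Rabs a0 + Rabs b0)) ->
  Rabs (b - b0) < Rmin 1 (eps / (2 + Rabs a0 + Rabs b0)) ->
  Rabs (a * b - a0 * b0) < eps.
Proof.
  intros He Ha Hb. set (K := 2 + Rabs a0 + Rabs b0) in *.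
  assert (HK : 0 < K) by (unfold K; generalize (Rabs_pos a0) (Rabs_pos b0); lra).
  set (e := eps / K) in *. assert (He' : e * K = eps) by (unfold e; field; lra).
  assert (Hm1 : Rmin 1 e <= 1) by apply Rmin_l. assert (Hm2 : Rmin 1 e <= e) by apply Rmin_r.
  replace (a * b - a0 * b0) with ((a - a0) * (b - b0) + a0 * (b - b0) + b0 * (a - a0)) by ring.
  eapply Rle_lt_trans. apply Rabs_triang. eapply Rle_lt_trans.
  apply Rplus_le_compat_r. apply Rabs_triang. rewrite !Rabs_mult.
  set (m := Rmin 1 e) in *.
  assert (0 <= Rabs (a - a0)) by apply Rabs_pos. assert (0 <= Rabs (b - b0)) by apply Rabs_pos.
  assert (0 <= Rabs a0) by apply Rabs_pos. assert (0 <= Rabs b0) by apply Rabs_pos.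
  assert (Rabs (a - a0) * Rabs (b - b0) <= m * 1) by (apply Rmult_le_compat; lra).
  assert (Rabs a0 * Rabs (b - b0) <= Rabs a0 * m) by (apply Rmult_le_compat_l; lra).
  assert (Rabs b0 * Rabs (a - a0) <= Rabs b0 * m) by (apply Rmult_le_compat_l; lra).
  assert (m * K <= e * K) by (apply Rmult_le_compat_r; lra).
  unfold K in *. nra.
Qed.

Lemma Good_cont V f : Good V f -> forall w, V w -> cont_at V f w.
Proof.
  induction 1; intros w Hw eps Heps.
  - exists eps. split. auto. intros. eapply Rle_lt_trans. apply co_dist. auto.
  - exists 1. split. lra. intros. replace (c - c) with 0 by ring. rewrite Rabs_R0. auto.
  - destruct (IHGood1 w Hw (eps/2)) as [d1 [Hd1 H1]]. lra.
    destruct (IHGood2 w Hw (eps/2)) as [d2 [Hd2 H2]]. lra.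
    exists (Rmin d1 d2). split. apply Rmin_pos; auto. intros w' Hw' Hd.
    generalize (H1 w' Hw' (Rlt_le_trans _ _ _ Hd (Rmin_l _ _))).
    generalize (H2 w' Hw' (Rlt_le_trans _ _ _ Hd (Rmin_r _ _))). intros A B.
    replace (f w' + g w' - (f w + g w)) with ((f w' - f w) + (g w' - g w)) by ring.
    eapply Rle_lt_trans. apply Rabs_triang. lra.
  - set (e := Rmin 1 (eps / (2 + Rabs (f w) + Rabs (g w)))).
    assert (He : 0 < e). { apply Rmin_pos. lra. apply Rdiv_lt_0_compat. auto.
      generalize (Rabs_pos (f w)) (Rabs_pos (g w)); lra. }
    destruct (IHGood1 w Hw e He) as [d1 [Hd1 H1]].
    destruct (IHGood2 w Hw e He) as [d2 [Hd2 H2]].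
    exists (Rmin d1 d2). split. apply Rmin_pos; auto. intros w' Hw' Hd.
    apply mult_cont_lemma; auto.
    apply H1; auto. eapply Rlt_le_trans. apply Hd. apply Rmin_l.
    apply H2; auto. eapply Rlt_le_trans. apply Hd. apply Rmin_r.
  - destruct (Lc_cont_eps a g (q w) H (H1 w Hw) eps Heps) as [d1 [Hd1 Hg]].
    destruct (IHGood w Hw d1 Hd1) as [d2 [Hd2 Hq]].
    exists d2. split; auto.
Qed.

Definition shift_open (V : C2 -> Prop) : Prop :=
  forall w, V w -> forall k, locally 0 (fun s0 => V (shift k s0 w)).

Lemma Ck_ext V : shift_open V -> forall n f g, (forall w, V w -> f w = g w) ->
  Ck n V f -> Ck n V g.
Proof.
  intros HV. induction n; intros f g E C.
  - simpl in *. intros w Hw eps He. destruct (C w Hw eps He) as [d [Hd Hc]].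
    exists d. split; auto. intros w' Hw' Hd'. rewrite <- !E by auto. apply Hc; auto.
  - simpl in *. destruct C as [C0 C1]. split.
    + intros w Hw eps He. destruct (C0 w Hw eps He) as [d [Hd Hc]].
      exists d. split; auto. intros w' Hw' Hd'. rewrite <- !E by auto. apply Hc; auto.
    + intros k Hk. destruct (C1 k Hk) as [D1 D2]. split.
      * intros w Hw. unfold rdiff_at. apply ex_derive_ext_loc with (fun s => f (shift k s w)).
        generalize (HV w Hw k). apply filter_imp. intros; auto. apply D1; auto.
      * apply IHn with (rpartial k f); auto. intros w Hw. unfold rpartial.
        apply Derive_ext_loc. generalize (HV w Hw k). apply filter_imp. intros; auto.
Qed.

Lemma Ck_good V : shift_open V -> forall n f, Good V f -> Ck n V f.
Proof.
  intros HV. induction n; intros f G.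
  - simpl. intros w Hw. apply Good_cont; auto.
  - simpl. split. intros w Hw. apply Good_cont; auto.
    intros k Hk. destruct (Good_deriv V f G k Hk) as [f' [G' D']]. split.
    + intros w Hw. exists (f' w). apply D'; auto.
    + apply Ck_ext with f'; auto. intros w Hw. unfold rpartial. symmetry.
      apply is_derive_unique. apply D'; auto.
Qed.

Lemma smooth_good V f : shift_open V -> Good V f -> smooth_on V f.
Proof. intros. intro n. apply Ck_good; auto. Qed.

Lemma nonzero2_s2 w : nonzero2 w <-> 0 < s2 w.
Proof.
  destruct w as [[x1 y1] [x2 y2]]. unfold nonzero2, zero2, s2, co, RtoC; simpl. split.
  - intro H. destruct (Req_dec x1 0); destruct (Req_dec y1 0); destruct (Req_dec x2 0);
    destruct (Req_dec y2 0); try (subst; exfalso; apply H; reflexivity); nra.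
  - intros H E. inversion E. subst. lra.
Qed.

Lemma s2_shift k s0 w : (k < 4)%nat -> s2 (shift k s0 w) = s2 w + 2 * s0 * co k w + s0 * s0.
Proof.
  intro. destruct w as [[x1 y1] [x2 y2]]. destruct k as [|[|[|[|]]]]; try lia; unfold s2, co; simpl; ring.
Qed.

Lemma s2_deriv i w : (i < 4)%nat -> is_derive (fun s0 => s2 (shift i s0 w)) 0 (2 * co i w).
Proof.
  intro. destruct w as [[x1 y1] [x2 y2]].
  destruct i as [|[|[|[|]]]]; try lia; unfold s2, co, shift; cbn [fst snd]; auto_derive; auto; ring.
Qed.

Lemma shift_open_nonzero : shift_open nonzero2.
Proof.
  intros w Hw k. apply nonzero2_s2 in Hw.
  destruct (Compare_dec.lt_dec k 4) as [Hk|Hk].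
  - apply locally_R. set (c := Rabs (co k w)).
    assert (0 <= c) by apply Rabs_pos.
    exists (s2 w / (2 * (c + 1))). split. apply Rdiv_lt_0_compat; lra.
    intros y Hy. apply nonzero2_s2. rewrite s2_shift by auto.
    rewrite Rminus_0_r in Hy.
    assert (Rabs (2 * y * co k w) <= 2 * Rabs y * c) by (rewrite !Rabs_mult, Rabs_right by lra; unfold c; lra).
    assert (2 * Rabs y * c <= s2 w * c / (c + 1)).
    { apply Rle_trans with (2 * (s2 w / (2 * (c + 1))) * c). apply Rmult_le_compat_r; lra.
      right; field; lra. }
    assert (s2 w * c / (c + 1) < s2 w).
    { apply Rmult_lt_reg_r with (c + 1). lra. unfold Rdiv. rewrite Rmult_assoc, Rinv_l by lra. nra. }
    assert (- (2 * y * co k w) <= Rabs (2 * y * co k w)) by (rewrite <- Rabs_Ropp; apply RRle_abs).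
    nra.
  - (* k >= 4 behaves like 3 *)
    apply locally_R. set (c := Rabs (co 3 w)).
    assert (0 <= c) by apply Rabs_pos.
    exists (s2 w / (2 * (c + 1))). split. apply Rdiv_lt_0_compat; lra.
    intros y Hy. apply nonzero2_s2.
    assert (E : shift k y w = shift 3 y w).
    { destruct w as [[x1 y1] [x2 y2]]. destruct k as [|[|[|[|]]]]; try lia; reflexivity. }
    rewrite E, s2_shift by lia. rewrite Rminus_0_r in Hy.
    assert (Rabs (2 * y * co 3 w) <= 2 * Rabs y * c) by (rewrite !Rabs_mult, Rabs_right by lra; unfold c; lra).
    assert (2 * Rabs y * c <= s2 w * c / (c + 1)).
    { apply Rle_trans with (2 * (s2 w / (2 * (c + 1))) * c). apply Rmult_le_compat_r; lra.
      right; field; lra. }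
    assert (s2 w * c / (c + 1) < s2 w).
    { apply Rmult_lt_reg_r with (c + 1). lra. unfold Rdiv. rewrite Rmult_assoc, Rinv_l by lra. nra. }
    assert (- (2 * y * co 3 w) <= Rabs (2 * y * co 3 w)) by (rewrite <- Rabs_Ropp; apply RRle_abs).
    nra.
Qed.

Lemma shift_open_True : shift_open (fun _ => True).
Proof. intros w _ k. apply locally_R. exists 1. split. lra. auto. Qed.

Definition wc (j : nat) (w : C2) : C := match j with O => fst w | _ => snd w end.
Definition hform (p1 p2 : R -> R) : form11 := fun w j k =>
  Cplus (if Nat.eqb j k then RtoC (p1 (s2 w)) else RtoC 0)
        (Cmult (RtoC (p2 (s2 w))) (Cmult (Cconj (wc j w)) (wc k w))).

Definition Rq j k w := co (2*j) w * co (2*k) w + co (2*j+1) w * co (2*k+1) w.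
Definition Iq j k w := co (2*j) w * co (2*k+1) w - co (2*j+1) w * co (2*k) w.
Definition dl (j k : nat) : R := if Nat.eqb j k then 1 else 0.
Definition dco (i a : nat) : R := if Nat.eqb (Nat.min a 3) i then 1 else 0.

Lemma hform_Re p1 p2 w j k : (j < 2)%nat -> (k < 2)%nat ->
  Re (hform p1 p2 w j k) = dl j k * p1 (s2 w) + p2 (s2 w) * Rq j k w.
Proof.
  intros. destruct w as [[x1 y1] [x2 y2]].
  destruct j as [|[|]]; destruct k as [|[|]]; try lia;
  unfold hform, Rq, dl, wc, co, Cplus, Cmult, Cconj, RtoC; simpl; ring.
Qed.
Lemma hform_Im p1 p2 w j k : (j < 2)%nat -> (k < 2)%nat ->
  Im (hform p1 p2 w j k) = 0 * p1 (s2 w) + p2 (s2 w) * Iq j k w.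
Proof.
  intros. destruct w as [[x1 y1] [x2 y2]].
  destruct j as [|[|]]; destruct k as [|[|]]; try lia;
  unfold hform, Iq, dl, wc, co, Cplus, Cmult, Cconj, RtoC; simpl; ring.
Qed.

Lemma isd_gen (a : R) (g1 g1' g2 g2' : R -> R) (Q : C2 -> R) dQ i w : (i < 4)%nat ->
  is_derive g1 (s2 w) (g1' (s2 w)) -> is_derive g2 (s2 w) (g2' (s2 w)) ->
  is_derive (fun s0 => Q (shift i s0 w)) 0 dQ ->
  is_derive (fun s0 => a * g1 (s2 (shift i s0 w)) + g2 (s2 (shift i s0 w)) * Q (shift i s0 w)) 0
    (a * (2 * co i w * g1' (s2 w)) + (2 * co i w * g2' (s2 w) * Q w + g2 (s2 w) * dQ)).
Proof.
  intros Hi H1 H2 HQ.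
  assert (C1 : is_derive (fun s0 => g1 (s2 (shift i s0 w))) 0 (2 * co i w * g1' (s2 w))).
  { apply isd_comp with (g := fun s0 => s2 (shift i s0 w)). rewrite shift0. auto. apply s2_deriv; auto. }
  assert (C2 : is_derive (fun s0 => g2 (s2 (shift i s0 w))) 0 (2 * co i w * g2' (s2 w))).
  { apply isd_comp with (g := fun s0 => s2 (shift i s0 w)). rewrite shift0. auto. apply s2_deriv; auto. }
  eapply isd_eq. apply isd_plus.
  apply (isd_mult (fun _ => a) (fun s0 => g1 (s2 (shift i s0 w)))). apply isd_const. exact C1.
  apply (isd_mult (fun s0 => g2 (s2 (shift i s0 w)))). exact C2. exact HQ.
  cbv beta. rewrite !shift0. simpl. ring.
Qed.

Lemma co_deriv' i a w : (i < 4)%nat -> is_derive (fun s0 => co a (shift i s0 w)) 0 (dco i a).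
Proof. intros. apply co_deriv; auto. Qed.

Definition dRq i j k w := dco i (2*j) * co (2*k) w + co (2*j) w * dco i (2*k)
  + (dco i (2*j+1) * co (2*k+1) w + co (2*j+1) w * dco i (2*k+1)).
Definition dIq i j k w := dco i (2*j) * co (2*k+1) w + co (2*j) w * dco i (2*k+1)
  - (dco i (2*j+1) * co (2*k) w + co (2*j+1) w * dco i (2*k)).

Lemma isd_prod2 a b i w : (i < 4)%nat ->
  is_derive (fun s0 => co a (shift i s0 w) * co b (shift i s0 w)) 0
    (dco i a * co b w + co a w * dco i b).
Proof.
  intros. eapply isd_eq. apply (isd_mult (fun s0 => co a (shift i s0 w)) (fun s0 => co b (shift i s0 w)));
  apply co_deriv'; auto. cbv beta. rewrite shift0. reflexivity.
Qed.

Lemma Rq_deriv i j k w : (i < 4)%nat -> is_derive (fun s0 => Rq j k (shift i s0 w)) 0 (dRq i j k w).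
Proof.
  intros. unfold Rq, dRq. apply (isd_plus (fun s0 => co (2*j) (shift i s0 w) * co (2*k) (shift i s0 w))
    (fun s0 => co (2*j+1) (shift i s0 w) * co (2*k+1) (shift i s0 w))); apply isd_prod2; auto.
Qed.
Lemma Iq_deriv i j k w : (i < 4)%nat -> is_derive (fun s0 => Iq j k (shift i s0 w)) 0 (dIq i j k w).
Proof.
  intros. unfold Iq, dIq. eapply isd_eq. apply (isd_plus (fun s0 => co (2*j) (shift i s0 w) * co (2*k+1) (shift i s0 w))
    (fun s0 => - (co (2*j+1) (shift i s0 w) * co (2*k) (shift i s0 w)))). apply isd_prod2; auto.
  apply isd_opp. apply isd_prod2; auto. simpl. ring.
Qed.

Section Form.
Variables (p1 p2 p3 : R -> R).
Hypothesis D1 : forall s, 0 < s -> is_derive p1 s (p2 s).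
Hypothesis D2 : forall s, 0 < s -> is_derive p2 s (p3 s).

Lemma rp_Re i j k w : (i < 4)%nat -> (j < 2)%nat -> (k < 2)%nat -> 0 < s2 w ->
  rpartial i (fun p => Re (hform p1 p2 p j k)) w =
  dl j k * (2 * co i w * p2 (s2 w)) + (2 * co i w * p3 (s2 w) * Rq j k w + p2 (s2 w) * dRq i j k w).
Proof.
  intros. unfold rpartial. apply is_derive_unique.
  eapply is_derive_ext. intro s0. symmetry. apply hform_Re; auto.
  apply isd_gen; auto. apply Rq_deriv; auto.
Qed.
Lemma rp_Im i j k w : (i < 4)%nat -> (j < 2)%nat -> (k < 2)%nat -> 0 < s2 w ->
  rpartial i (fun p => Im (hform p1 p2 p j k)) w =
  0 * (2 * co i w * p2 (s2 w)) + (2 * co i w * p3 (s2 w) * Iq j k w + p2 (s2 w) * dIq i j k w).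
Proof.
  intros. unfold rpartial. apply is_derive_unique.
  eapply is_derive_ext. intro s0. symmetry. apply hform_Im; auto.
  apply isd_gen; auto. apply Iq_deriv; auto.
Qed.

Lemma hform_closed w : 0 < s2 w -> forall j k l, (j < 2)%nat -> (k < 2)%nat -> (l < 2)%nat ->
  dW l (fun p => hform p1 p2 p j k) w = dW j (fun p => hform p1 p2 p l k) w /\
  dWbar l (fun p => hform p1 p2 p j k) w = dWbar k (fun p => hform p1 p2 p j l) w.
Proof.
  intros Hs j k l Hj Hk Hl. unfold dW, dWbar, cpartial.
  destruct j as [|[|]]; destruct k as [|[|]]; destruct l as [|[|]]; try lia;
  rewrite ?rp_Re, ?rp_Im by (auto; lia);
  unfold dl, Rq, Iq, dRq, dIq, dco; simpl;
  split; apply injective_projections; unfold Cmult, Cminus, Cplus, Copp, RtoC, Ci; simpl; ring.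
Qed.
End Form.

Lemma hform_herm p1 p2 w : hermitian (hform p1 p2 w).
Proof.
  intros j k Hj Hk. destruct w as [[x1 y1] [x2 y2]].
  destruct j as [|[|]]; destruct k as [|[|]]; try lia;
  unfold hform, wc; simpl; apply injective_projections;
  unfold Cmult, Cplus, Cconj, RtoC; simpl; ring.
Qed.

Lemma hform_neg p1 p2 w j k : (j < 2)%nat -> (k < 2)%nat ->
  hform p1 p2 (C2neg w) j k = hform p1 p2 w j k.
Proof.
  intros. assert (E : s2 (C2neg w) = s2 w).
  { destruct w as [[x1 y1] [x2 y2]]. unfold s2, co, C2neg, Copp; simpl; ring. }
  unfold hform. rewrite E. f_equal. f_equal.
  destruct w as [[x1 y1] [x2 y2]].
  destruct j as [|[|]]; destruct k as [|[|]]; try lia;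
  unfold wc, C2neg; simpl; apply injective_projections; unfold Cmult, Cconj, Copp; simpl; ring.
Qed.

Lemma hform_wedge p1 p2 w :
  wedge_sq_coeff (hform p1 p2) w = 2 * (p1 (s2 w) * p1 (s2 w) + p1 (s2 w) * p2 (s2 w) * s2 w).
Proof.
  unfold wedge_sq_coeff, hform. destruct w as [[x1 y1] [x2 y2]].
  set (a := p1 _). set (b := p2 _). unfold s2, co, wc; simpl.
  unfold Cmult, Cminus, Cplus, Copp, Cconj, RtoC; simpl. ring.
Qed.

Lemma hform_posdef p1 p2 w : 0 < s2 w -> 0 < p1 (s2 w) -> 0 < p1 (s2 w) + s2 w * p2 (s2 w) ->
  posdef (hform p1 p2 w).
Proof.
  intros Hs Ha Hb [a0 b0] [a1 b1] Hv.
  assert (HN : 0 < a0*a0 + b0*b0 + a1*a1 + b1*b1).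
  { apply (nonzero2_s2 ((a0,b0),(a1,b1))) in Hv. unfold s2, co in Hv; simpl in Hv. lra. }
  revert Hs Ha Hb. unfold hform. set (a := p1 (s2 w)). set (b := p2 (s2 w)).
  intros Hs Ha Hb.
  destruct w as [[x1 y1] [x2 y2]]. unfold s2, co in *; simpl in *.
  set (N := a0*a0 + b0*b0 + a1*a1 + b1*b1) in *.
  set (S := x1*x1 + y1*y1 + x2*x2 + y2*y2) in *.
  set (SR := a0*x1 + b0*y1 + a1*x2 + b1*y2).
  set (SI := b0*x1 - a0*y1 + b1*x2 - a1*y2).
  match goal with |- 0 < ?X => replace X with (a * N + b * (SR*SR + SI*SI)) end.
  2: { unfold quad, wc, N, SR, SI; simpl. unfold Cmult, Cplus, Cconj, RtoC; simpl. ring. }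
  set (DR := a0*x2 - b0*y2 - a1*x1 + b1*y1). set (DI := a0*y2 + b0*x2 - a1*y1 - b1*x1).
  assert (L : N * S - (SR*SR + SI*SI) = DR*DR + DI*DI) by (unfold N, S, SR, SI, DR, DI; ring).
  assert (0 <= DR*DR + DI*DI) by nra. assert (0 <= SR*SR+SI*SI) by nra.
  destruct (Rle_dec 0 b).
  - nra.
  - assert (b * (SR*SR+SI*SI) >= b * (N * S)) by nra. nra.
Qed.

Lemma hform_hat w : 0 < s2 w -> forall p1 p2 : R -> R, p1 (s2 w) = 1 -> p2 (s2 w) = 0 ->
  form_eq_at (hform p1 p2) omega_hat w.
Proof.
  intros Hs p1 p2 E1 E2 j k Hj Hk. unfold hform, omega_hat. rewrite E1, E2.
  destruct (Nat.eqb j k); apply injective_projections; unfold Cmult, Cplus, RtoC; simpl; ring.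
Qed.

Lemma div_eq_cross a b c d : b <> 0 -> d <> 0 -> a * d = c * b -> a / b = c / d.
Proof. intros. unfold Rdiv. replace c with (a * d / b) by (field_simplify_eq; [lra|auto]). field. auto. Qed.

Definition Fpot (t s : R) : R := sqrt (s*s + t^4) + t^2 * ln (s / (sqrt (s*s+t^4) + t^2)).
Definition F1 (t s : R) : R := sqrt (s*s + t^4) / s.
Definition F2 (t s : R) : R := - t^4 / (s * s * sqrt (s*s + t^4)).

Lemma Fpot_deriv t s : 0 < t -> 0 < s -> is_derive (Fpot t) s (F1 t s).
Proof.
  intros Ht Hs. unfold Fpot, F1.
  assert (HQ : 0 < sqrt (s*s+t^4)) by (apply sqrt_lt_R0; nra).
  auto_derive.
  { replace (t * (t * (t * (t * 1)))) with (t^4) by ring.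
    replace (t * (t*1)) with (t^2) by ring.
    assert (0 < t^4) by (apply pow_lt; lra). assert (0 < t^2) by (apply pow_lt; lra).
    assert (HQ' : 0 < sqrt (s * s + t ^ 4) + t ^ 2) by lra.
    repeat split; try nra; try lra.
    apply Rmult_lt_0_compat. auto. apply Rinv_0_lt_compat. lra. }
  replace (t * (t * (t * (t * 1)))) with (t^4) by ring.
  replace (t * (t*1)) with (t^2) by ring.
  assert (HQ2 : sqrt (s*s+t^4) * sqrt (s*s+t^4) = s*s+t^4) by (apply sqrt_sqrt; nra).
  set (Q := sqrt (s*s+t^4)) in *. set (T := t^2) in *.
  assert (HT : t^4 = T*T) by (unfold T; ring). rewrite HT in HQ2.
  assert (0 < T) by (unfold T; nra).
  field_simplify; try (split; lra).
  apply div_eq_cross. assert (0 < s*Q) by nra. assert (0 < s*Q*Q) by nra. assert (0 < s*Q*T) by nra. simpl; nra. lra.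
  replace (Q * (2 * s * Q ^ 2 + 2 * s * Q * T)) with (2*s*Q*(Q*Q) + 2*s*Q^2*T) by ring. rewrite HQ2. ring.
  all: lra.
Qed.

Lemma F1_deriv t s : 0 < t -> 0 < s -> is_derive (F1 t) s (F2 t s).
Proof.
  intros Ht Hs. unfold F1, F2.
  assert (HQ : 0 < sqrt (s*s+t^4)) by (apply sqrt_lt_R0; nra).
  auto_derive.
  { replace (t * (t * (t * (t * 1)))) with (t^4) by ring.
    assert (0 < t^4) by (apply pow_lt; lra). repeat split; try nra. }
  replace (t * (t * (t * (t * 1)))) with (t^4) by ring.
  assert (HQ2 : sqrt (s*s+t^4) * sqrt (s*s+t^4) = s*s+t^4) by (apply sqrt_sqrt; nra).
  set (Q := sqrt (s*s+t^4)) in *.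
  field_simplify; try (split; lra).
  assert (0 < s*s) by nra. assert (0 < s*s*Q) by (apply Rmult_lt_0_compat; lra).
  apply div_eq_cross. apply Rgt_not_eq; simpl; nra. apply Rgt_not_eq; simpl; nra.
  replace (Q^2) with (s*s+t^4) by (simpl; lra). ring.
  all: lra.
Qed.

Lemma EH_eq t w : EH_potential t w = Fpot t (s2 w).
Proof.
  unfold EH_potential, Fpot. rewrite r_of_s2.
  assert (H0 := s2_nonneg w).
  replace (sqrt (s2 w) ^ 4) with (s2 w * s2 w).
  replace (sqrt (s2 w) ^ 2) with (s2 w). reflexivity.
  rewrite pow2_sqrt; auto.
  replace (sqrt (s2 w) ^ 4) with ((sqrt (s2 w) ^ 2) ^ 2) by ring. rewrite pow2_sqrt; auto. ring.
Qed.

Lemma dWbar_EH t w k : 0 < t -> 0 < s2 w -> (k < 2)%nat ->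
  dWbar k (fun p => RtoC (EH_potential t p)) w = (F1 t (s2 w) * co (2*k) w, F1 t (s2 w) * co (2*k+1) w).
Proof.
  intros Ht Hs Hk.
  assert (HR : forall m, (m < 4)%nat -> rpartial m (fun p => Re (RtoC (EH_potential t p))) w = 2 * co m w * F1 t (s2 w)).
  { intros m Hm. unfold rpartial. apply is_derive_unique.
    apply is_derive_ext with (f := fun s0 => Fpot t (s2 (shift m s0 w))).
    intro s0. rewrite EH_eq. reflexivity.
    apply isd_comp with (g := fun s0 => s2 (shift m s0 w)). rewrite shift0. apply Fpot_deriv; auto.
    apply s2_deriv; auto. }
  assert (HI : forall m, rpartial m (fun p => Im (RtoC (EH_potential t p))) w = 0).
  { intros m. unfold rpartial. simpl. apply Derive_const. }
  unfold dWbar, cpartial. rewrite !HR, !HI by lia.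
  apply injective_projections; unfold Cmult, Cplus, RtoC, Ci; simpl; field.
Qed.

Lemma omega_tilde_eq t w : 0 < t -> 0 < s2 w -> forall j k, (j < 2)%nat -> (k < 2)%nat ->
  omega_tilde t w j k = hform (F1 t) (F2 t) w j k.
Proof.
  intros Ht Hs j k Hj Hk. unfold omega_tilde.
  assert (HR : forall i, (i < 4)%nat -> rpartial i (fun p => Re (dWbar k (fun p0 => RtoC (EH_potential t p0)) p)) w
     = 0 * (2 * co i w * F2 t (s2 w)) + (2 * co i w * F2 t (s2 w) * co (2*k) w + F1 t (s2 w) * dco i (2*k))).
  { intros i Hi. unfold rpartial. apply is_derive_unique.
    apply is_derive_ext_loc with (fun s0 => 0 * F1 t (s2 (shift i s0 w)) + F1 t (s2 (shift i s0 w)) * co (2*k) (shift i s0 w)).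
    { generalize (shift_open_nonzero w (proj2 (nonzero2_s2 w) Hs) i). apply filter_imp.
      intros s0 H0. apply nonzero2_s2 in H0. rewrite dWbar_EH; auto. simpl. ring. }
    apply isd_gen; auto; try (apply F1_deriv; auto). apply co_deriv'; auto. }
  assert (HI : forall i, (i < 4)%nat -> rpartial i (fun p => Im (dWbar k (fun p0 => RtoC (EH_potential t p0)) p)) w
     = 0 * (2 * co i w * F2 t (s2 w)) + (2 * co i w * F2 t (s2 w) * co (2*k+1) w + F1 t (s2 w) * dco i (2*k+1))).
  { intros i Hi. unfold rpartial. apply is_derive_unique.
    apply is_derive_ext_loc with (fun s0 => 0 * F1 t (s2 (shift i s0 w)) + F1 t (s2 (shift i s0 w)) * co (2*k+1) (shift i s0 w)).
    { generalize (shift_open_nonzero w (proj2 (nonzero2_s2 w) Hs) i). apply filter_imp.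
      intros s0 H0. apply nonzero2_s2 in H0. rewrite dWbar_EH; auto. simpl. ring. }
    apply isd_gen; auto; try (apply F1_deriv; auto). apply co_deriv'; auto. }
  unfold dW, cpartial. rewrite !HR, !HI by lia.
  destruct w as [[x1 y1] [x2 y2]].
  destruct j as [|[|]]; destruct k as [|[|]]; try lia;
  unfold hform, dco, wc, co; simpl; apply injective_projections;
  unfold Cmult, Cplus, Cminus, Copp, Cconj, RtoC, Ci; simpl; field.
Qed.

Definition Sf (y : R) : R := fn 0 y * / (fn 0 y + fn 0 (1 - y)).

Lemma fn_sum_pos y : 0 < fn 0 y + fn 0 (1 - y).
Proof.
  destruct (Rlt_dec 0 y). generalize (fn_pos 0 y r) (fn_nonneg 0 (1 - y)); lra.
  generalize (fn_pos 0 (1 - y) ltac:(lra)) (fn_nonneg 0 y); lra.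
Qed.

Lemma Sf_Lc a : Lc a Sf.
Proof.
  apply Lc_ext with (fun y => fn 0 (1 * y + 0) * / (fn 0 (1 * y + 0) + fn 0 ((-1) * y + 1))).
  apply Lc_mult. constructor. apply Lc_inv. apply Lc_plus; constructor.
  intros. replace (1 * y + 0) with y by ring. replace (-1 * y + 1) with (1 - y) by ring. apply fn_sum_pos.
  intros y _. unfold Sf. replace (1 * y + 0) with y by ring. replace (-1 * y + 1) with (1 - y) by ring. reflexivity.
Qed.

Lemma Sf_low y : y <= 0 -> Sf y = 0.
Proof. intro. unfold Sf. rewrite (fn_nonpos 0 y) by auto. ring. Qed.

Lemma Sf_high y : 1 <= y -> Sf y = 1.
Proof.
  intro. unfold Sf. rewrite (fn_nonpos 0 (1 - y)) by lra. rewrite Rplus_0_r.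
  field. generalize (fn_pos 0 y ltac:(lra)); lra.
Qed.

Lemma Sf_bounds y : 0 <= Sf y <= 1.
Proof.
  unfold Sf. generalize (fn_sum_pos y) (fn_nonneg 0 y) (fn_nonneg 0 (1 - y)). intros.
  split. apply Rmult_le_pos. auto. left; apply Rinv_0_lt_compat; auto.
  apply Rmult_le_reg_r with (fn 0 y + fn 0 (1 - y)). auto.
  rewrite Rmult_assoc, Rinv_l by lra. lra.
Qed.

Lemma S_pack : exists S1 M ym, Lc (-1) S1 /\ (forall y, -1 < y -> is_derive Sf y (S1 y)) /\
  (forall y, -1 < y -> y < 0 -> S1 y = 0) /\ (forall y, 1 < y -> S1 y = 0) /\
  (forall y, -1 < y -> S1 y <= M) /\ 0 <= ym <= 1 /\ S1 ym = M /\ 1 <= M.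
Proof.
  destruct (Lc_deriv (-1) Sf (Sf_Lc (-1))) as [S1 [L1 D1]].
  assert (Z1 : forall y, -1 < y -> y < 0 -> S1 y = 0).
  { intros y H1 H2.
    assert (H : is_derive Sf y 0).
    { apply is_derive_ext_loc with (fun _ => 0). apply locally_R. exists (- y). split. lra.
      intros x Hx. apply Rabs_def2 in Hx. rewrite Sf_low; auto. lra. apply isd_const. }
    rewrite <- (is_derive_unique _ _ _ H). symmetry. apply is_derive_unique. apply D1; auto. }
  assert (Z2 : forall y, 1 < y -> S1 y = 0).
  { intros y H1.
    assert (H : is_derive Sf y 0).
    { apply is_derive_ext_loc with (fun _ => 1). apply locally_R. exists (y - 1). split. lra.
      intros x Hx. apply Rabs_def2 in Hx. rewrite Sf_high; auto. lra. apply isd_const. }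
    rewrite <- (is_derive_unique _ _ _ H). symmetry. apply is_derive_unique. apply D1; lra. }
  assert (Cn : forall c, -1 < c -> continuity_pt S1 c).
  { intros c Hc. apply continuity_pt_filterlim. apply (Lc_cont (-1)); auto. }
  assert (CS : forall c, -1 < c -> continuity_pt Sf c).
  { intros c Hc. apply continuity_pt_filterlim. apply (Lc_cont (-1)); auto. apply Sf_Lc. }
  destruct (continuity_ab_maj S1 0 1 ltac:(lra) ltac:(intros; apply Cn; lra)) as [ym [Hmax Hym]].
  destruct (MVT_gen Sf 0 1 S1) as [c0 [Hc0 Hmvt]].
  { intros x Hx. apply D1. rewrite Rmin_left in Hx by lra. lra. }
  { intros x Hx. apply CS. rewrite Rmin_left in Hx by lra. lra. }
  rewrite Rmin_left in Hc0 by lra. rewrite Rmax_right in Hc0 by lra.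
  rewrite Sf_high, Sf_low in Hmvt by lra.
  assert (HM : 1 <= S1 ym) by (generalize (Hmax c0 Hc0); nra).
  exists S1, (S1 ym), ym.
  refine (conj L1 (conj D1 (conj Z1 (conj Z2 (conj _ (conj Hym (conj eq_refl HM))))))).
  intros y Hy. destruct (Rlt_dec y 0). rewrite Z1 by auto. lra.
  destruct (Rlt_dec 1 y). rewrite Z2 by auto. lra. apply Hmax. lra.
Qed.

Section Constr.
Variables (S1 : R -> R) (M t : R).
Hypothesis HL1 : Lc (-1) S1.
Hypothesis HD1 : forall y, -1 < y -> is_derive Sf y (S1 y).
Hypothesis HZ1 : forall y, -1 < y -> y < 0 -> S1 y = 0.
Hypothesis HZ2 : forall y, 1 < y -> S1 y = 0.
Hypothesis HMx : forall y, -1 < y -> S1 y <= M.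
Hypothesis HM1 : 1 <= M.
Hypothesis Ht : 0 < t.

Definition Kc := 2 * M + 4.
Definition cc0 := Kc / 16 + 1.
Definition Lc0 := M + 1.
Definition yarg (X : R) := (X / t^4 - cc0) / Lc0.
Definition Af (X : R) := X + t^4 - t^4 * Sf (yarg X).
Definition A1f (X : R) := 1 - S1 (yarg X) / Lc0.
Definition p1 (s : R) := sqrt (Af (s*s)) * / s.
Definition p2 (s : R) := (s*s * A1f (s*s) - Af (s*s)) * / (s*s * sqrt (Af (s*s))).

Lemma t4_pos : 0 < t^4.
Proof. apply pow_lt; auto. Qed.
Lemma Lc0_pos : 0 < Lc0.
Proof. unfold Lc0; lra. Qed.

Lemma lt_div_l b a L : 0 < L -> b * L < a -> b < a / L.
Proof. intros. apply Rmult_lt_reg_r with L; auto. replace (a / L * L) with a by (field; lra). auto. Qed.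
Lemma div_lt_r b a L : 0 < L -> a < b * L -> a / L < b.
Proof. intros. apply Rmult_lt_reg_r with L; auto. replace (a / L * L) with a by (field; lra). auto. Qed.
Lemma div_le_r b a L : 0 < L -> a <= b * L -> a / L <= b.
Proof. intros. apply Rmult_le_reg_r with L; auto. replace (a / L * L) with a by (field; lra). auto. Qed.

Lemma yarg_gt X : - t^4 / 2 < X -> -1 < yarg X.
Proof.
  intro H. generalize t4_pos; intro. unfold yarg, cc0, Kc, Lc0.
  assert (- 1/2 < X / t^4). { apply lt_div_l; auto. lra. }
  apply lt_div_l. lra. lra.
Qed.

Lemma yarg_deriv X : is_derive yarg X (/ t^4 / Lc0).
Proof.
  generalize t4_pos Lc0_pos; intros. unfold yarg. auto_derive. auto. field. lra.
Qed.

Lemma Af_deriv X : - t^4 / 2 < X -> is_derive Af X (A1f X).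
Proof.
  intro H. generalize t4_pos Lc0_pos; intros. unfold Af, A1f.
  eapply isd_eq. apply isd_plus. apply isd_plus. apply isd_id. apply isd_const.
  apply isd_opp. apply (isd_mult (fun _ => t^4) (fun X => Sf (yarg X))). apply isd_const.
  apply isd_comp. apply HD1. apply yarg_gt; auto. apply yarg_deriv.
  simpl. field. lra.
Qed.

Lemma Af_pos X : - t^4 / 2 < X -> 0 < Af X.
Proof.
  intro H. generalize t4_pos Lc0_pos; intros. unfold Af.
  destruct (Rle_dec X 0).
  - rewrite Sf_low. lra. unfold yarg, cc0, Kc.
    assert (X / t^4 <= 0). { apply div_le_r; auto. lra. }
    left. apply div_lt_r. lra. lra.
  - generalize (Sf_bounds (yarg X)). intros. nra.
Qed.

Lemma A1f_ge X : - t^4 / 2 < X -> / (M + 1) <= A1f X.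
Proof.
  intro H. generalize (HMx _ (yarg_gt X H)). intro. unfold A1f, Lc0.
  apply Rle_trans with (1 - M / (M + 1)). right. field. lra.
  apply Rplus_le_compat_l. apply Ropp_le_contravar. unfold Rdiv. apply Rmult_le_compat_r.
  left; apply Rinv_0_lt_compat; lra. auto.
Qed.

Ltac lc_auto := repeat (first [apply Lc_plus | apply Lc_mult | apply Lc_id | apply Lc_const]).

Lemma yarg_Lc a : Lc a yarg.
Proof.
  apply Lc_ext with (fun X => X * (/ t^4 / Lc0) + (- cc0 / Lc0)). lc_auto.
  intros. unfold yarg. field. generalize t4_pos Lc0_pos; lra.
Qed.

Lemma Af_Lc : Lc (- t^4 / 2) Af.
Proof.
  apply Lc_ext with (fun X => (X + t^4) + (- t^4) * Sf (yarg X)).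
  apply Lc_plus. lc_auto. apply Lc_mult. lc_auto.
  apply Lc_comp with (-1). apply Sf_Lc. apply yarg_Lc. apply yarg_gt.
  intros. unfold Af. ring.
Qed.

Lemma A1f_Lc : Lc (- t^4 / 2) A1f.
Proof.
  apply Lc_ext with (fun X => 1 + (- / Lc0) * S1 (yarg X)).
  apply Lc_plus. lc_auto. apply Lc_mult. lc_auto.
  apply Lc_comp with (-1). auto. apply yarg_Lc. apply yarg_gt.
  intros. unfold A1f. field. generalize Lc0_pos; lra.
Qed.

Lemma sqAf_Lc : Lc (- t^4 / 2) (fun X => sqrt (Af X)).
Proof. apply Lc_sqrt. apply Af_Lc. apply Af_pos. Qed.
Lemma isqAf_Lc : Lc (- t^4 / 2) (fun X => / sqrt (Af X)).
Proof. apply Lc_inv. apply sqAf_Lc. intros. apply sqrt_lt_R0. apply Af_pos; auto. Qed.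

Lemma sq_gt s : 0 < s -> - t^4 / 2 < s * s.
Proof. intros. generalize t4_pos; nra. Qed.

Lemma p1_Lc : Lc 0 p1.
Proof.
  unfold p1. apply Lc_mult.
  apply (Lc_comp 0 (- t^4 / 2) (fun X => sqrt (Af X)) (fun s => s * s)). apply sqAf_Lc. lc_auto. intros; apply sq_gt; auto.
  apply Lc_inv. lc_auto. auto.
Qed.

Lemma p2_Lc : Lc 0 p2.
Proof.
  apply Lc_ext with (fun s => (s * s * A1f (s * s) + (-1) * Af (s * s)) * (/ (s * s) * / sqrt (Af (s * s)))).
  apply Lc_mult. apply Lc_plus. apply Lc_mult. lc_auto.
  apply Lc_comp with (- t^4 / 2). apply A1f_Lc. lc_auto. intros; apply sq_gt; auto.
  apply Lc_mult. lc_auto. apply Lc_comp with (- t^4 / 2). apply Af_Lc. lc_auto. intros; apply sq_gt; auto.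
  apply Lc_mult. apply Lc_inv. lc_auto. intros; nra.
  apply (Lc_comp 0 (- t^4 / 2) (fun X => / sqrt (Af X)) (fun s => s * s)). apply isqAf_Lc. lc_auto. intros; apply sq_gt; auto.
  intros s Hs. unfold p2. assert (0 < sqrt (Af (s * s))) by (apply sqrt_lt_R0, Af_pos, sq_gt; auto).
  field. split; nra.
Qed.

Lemma p1_deriv s : 0 < s -> is_derive p1 s (p2 s).
Proof.
  intro Hs. unfold p1, p2.
  assert (HA : 0 < Af (s * s)) by (apply Af_pos, sq_gt; auto).
  assert (HQ : 0 < sqrt (Af (s * s))) by (apply sqrt_lt_R0; auto).
  eapply isd_eq. apply (isd_mult (fun s => sqrt (Af (s * s))) (fun s => / s)).
  apply isd_sqrt; auto. apply (isd_comp Af (fun s => s * s)). apply Af_deriv, sq_gt; auto.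
  apply (isd_mult (fun s => s) (fun s => s)); apply isd_id.
  apply isd_inv. apply isd_id. lra.
  assert (HQ2 : sqrt (Af (s * s)) * sqrt (Af (s * s)) = Af (s * s)) by (apply sqrt_sqrt; lra).
  simpl. set (Q := sqrt (Af (s * s))) in *. set (A := Af (s * s)) in *. rewrite <- HQ2.
  field. split; lra.
Qed.

Lemma low_region s : 0 < s -> s * s <= t^4 * Kc / 16 -> p1 s = F1 t s /\ p2 s = F2 t s.
Proof.
  intros Hs H. generalize t4_pos Lc0_pos; intros.
  assert (Hy : yarg (s * s) < 0).
  { unfold yarg, cc0. assert (s * s / t^4 <= Kc / 16).
    { apply div_le_r; auto. lra. }
    apply div_lt_r. auto. lra. }
  assert (EA : Af (s * s) = s * s + t^4) by (unfold Af; rewrite Sf_low; lra).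
  assert (EA1 : A1f (s * s) = 1).
  { unfold A1f. rewrite HZ1; auto. field. lra. apply yarg_gt, sq_gt; auto. }
  unfold p1, p2, F1, F2. rewrite EA, EA1. split. field. lra.
  assert (0 < sqrt (s * s + t^4)) by (apply sqrt_lt_R0; nra).
  field. split; nra.
Qed.

Lemma high_region s : 0 < s -> t^4 * (cc0 + Lc0) < s * s -> p1 s = 1 /\ p2 s = 0.
Proof.
  intros Hs H. generalize t4_pos Lc0_pos; intros.
  assert (Hy : 1 < yarg (s * s)).
  { unfold yarg. apply lt_div_l. auto. assert ((cc0 + Lc0) < s * s / t^4). apply lt_div_l; auto. lra. lra. }
  assert (EA : Af (s * s) = s * s) by (unfold Af; rewrite Sf_high; lra).
  assert (EA1 : A1f (s * s) = 1) by (unfold A1f; rewrite HZ2; auto; field; lra).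
  unfold p1, p2. rewrite EA, EA1. rewrite sqrt_square by lra. split. field. lra. ring.
Qed.

Lemma wedge_id s : 0 < s -> p1 s * p1 s + p1 s * p2 s * s = A1f (s * s).
Proof.
  intros Hs. unfold p1, p2.
  assert (HA : 0 < Af (s * s)) by (apply Af_pos, sq_gt; auto).
  assert (HQ2 : sqrt (Af (s * s)) * sqrt (Af (s * s)) = Af (s * s)) by (apply sqrt_sqrt; lra).
  assert (HQ : 0 < sqrt (Af (s * s))) by (apply sqrt_lt_R0; auto).
  set (Q := sqrt (Af (s * s))) in *. set (A := Af (s * s)) in *. rewrite <- HQ2.
  field. split; lra.
Qed.

Lemma p1_pos s : 0 < s -> 0 < p1 s.
Proof.
  intros. unfold p1. apply Rmult_lt_0_compat. apply sqrt_lt_R0, Af_pos, sq_gt; auto.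
  apply Rinv_0_lt_compat; auto.
Qed.

Lemma p12_pos s : 0 < s -> 0 < p1 s + s * p2 s.
Proof.
  intros Hs. generalize (A1f_ge (s * s) (sq_gt s Hs)). intro HB.
  assert (0 < / (M + 1)) by (apply Rinv_0_lt_compat; lra).
  replace (p1 s + s * p2 s) with (s * A1f (s * s) * / sqrt (Af (s * s))).
  apply Rmult_lt_0_compat. apply Rmult_lt_0_compat; lra. apply Rinv_0_lt_compat, sqrt_lt_R0, Af_pos, sq_gt; auto.
  unfold p1, p2.
  assert (HA : 0 < Af (s * s)) by (apply Af_pos, sq_gt; auto).
  assert (HQ2 : sqrt (Af (s * s)) * sqrt (Af (s * s)) = Af (s * s)) by (apply sqrt_sqrt; lra).
  assert (HQ : 0 < sqrt (Af (s * s))) by (apply sqrt_lt_R0; auto).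
  set (Q := sqrt (Af (s * s))) in *. set (A := Af (s * s)) in *. rewrite <- HQ2.
  field. split; lra.
Qed.

Lemma Af0 : Af 0 = t^4 /\ A1f 0 = 1.
Proof.
  generalize t4_pos Lc0_pos; intros.
  assert (Hy : yarg 0 < 0) by (unfold yarg, cc0, Kc; apply div_lt_r; auto; unfold Rdiv; rewrite Rmult_0_l; lra).
  split. unfold Af. rewrite Sf_low; lra.
  unfold A1f. rewrite HZ1; auto. field. lra. apply yarg_gt. lra.
Qed.
End Constr.

Section Chart.
Variables (S1 : R -> R) (M t : R).
Hypothesis HL1 : Lc (-1) S1.
Hypothesis HD1 : forall y, -1 < y -> is_derive Sf y (S1 y).
Hypothesis HZ1 : forall y, -1 < y -> y < 0 -> S1 y = 0.
Hypothesis HZ2 : forall y, 1 < y -> S1 y = 0.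
Hypothesis HMx : forall y, -1 < y -> S1 y <= M.
Hypothesis HM1 : 1 <= M.
Hypothesis Ht : 0 < t.

Definition ZZ (p : C2) := co 0 p * co 0 p + co 1 p * co 1 p.
Definition CC (p : C2) := 1 + ZZ p.
Definition XX (p : C2) := (co 2 p * co 2 p + co 3 p * co 3 p) * CC p * CC p.
Definition Gr (p : C2) := CC p * A1f S1 M t (XX p) * / 2 * / sqrt (Af M t (XX p)).
Definition Gc (p : C2) (a b : nat) : C :=
  match a, b with
  | O, O => RtoC (sqrt (Af M t (XX p)) * / CC p + ZZ p * (XX p * A1f S1 M t (XX p) - Af M t (XX p))
                   * / (CC p * CC p) * / sqrt (Af M t (XX p)))
  | O, _ => Cmult (RtoC (Gr p)) (Cmult (Cconj (fst p)) (snd p))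
  | _, O => Cmult (RtoC (Gr p)) (Cmult (fst p) (Cconj (snd p)))
  | _, _ => RtoC (CC p * CC p * A1f S1 M t (XX p) * / 4 * / sqrt (Af M t (XX p)))
  end.

Lemma Gc_pull c z sg : sg <> RtoC 0 -> forall a b, (a < 2)%nat -> (b < 2)%nat ->
  Gc (z, Cmult sg sg) a b = pullback (chart_jac c z sg) (hform (p1 M t) (p2 S1 M t) (chart_pt c z sg)) a b.
Proof.
  intros Hsg a b Ha Hb.
  destruct z as [zp zq]. destruct sg as [sa sb].
  assert (Hr : 0 < sa * sa + sb * sb).
  { destruct (Req_dec sa 0); destruct (Req_dec sb 0); try nra. subst. exfalso. apply Hsg. reflexivity. }
  set (S := (sa * sa + sb * sb) * (1 + (zp * zp + zq * zq))).
  assert (HS : 0 < S) by (unfold S; nra).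
  assert (E1 : s2 (chart_pt c (zp, zq) (sa, sb)) = S).
  { destruct c; unfold s2, chart_pt, co, S, Cmult; simpl; ring. }
  assert (E2 : XX (@pair C C (zp, zq) (Cmult (sa, sb) (sa, sb))) = S * S).
  { unfold XX, CC, ZZ, co, S, Cmult; simpl; ring. }
  unfold Gc, Gr, hform. rewrite E1. rewrite E2. unfold p1, p2.
  assert (HA : 0 < Af M t (S * S)) by (apply Af_pos; auto; generalize (t4_pos t Ht); nra).
  assert (HQ2 : sqrt (Af M t (S * S)) * sqrt (Af M t (S * S)) = Af M t (S * S)) by (apply sqrt_sqrt; lra).
  assert (HQ : 0 < sqrt (Af M t (S * S))) by (apply sqrt_lt_R0; auto).
  set (Q := sqrt (Af M t (S * S))) in *. set (A := Af M t (S * S)) in *.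
  set (B := A1f S1 M t (S * S)). rewrite <- HQ2. clearbody Q A B. subst A.
  assert (HC : 0 < 1 + (zp * zp + zq * zq)) by nra.
  unfold S in *.
  destruct c; destruct a as [|[|]]; destruct b as [|[|]]; try lia;
  unfold CC, ZZ, co, chart_pt, chart_jac, pullback, wc; simpl;
  apply injective_projections; unfold Cmult, Cplus, Cconj, Cinv, RtoC; simpl.
  all: field; repeat split; nra.
Qed.
End Chart.

Lemma smooth_ext V f g : shift_open V -> (forall w, V w -> f w = g w) -> smooth_on V f -> smooth_on V g.
Proof. intros HV E H n. apply Ck_ext with f; auto. Qed.

Section Chart2.
Variables (S1 : R -> R) (M t : R).
Hypothesis HL1 : Lc (-1) S1.
Hypothesis HD1 : forall y, -1 < y -> is_derive Sf y (S1 y).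
Hypothesis HZ1 : forall y, -1 < y -> y < 0 -> S1 y = 0.
Hypothesis HZ2 : forall y, 1 < y -> S1 y = 0.
Hypothesis HMx : forall y, -1 < y -> S1 y <= M.
Hypothesis HM1 : 1 <= M.
Hypothesis Ht : 0 < t.

Ltac gbase := repeat (first [apply G_plus | apply G_mult | apply G_const | apply G_co]).

Lemma gZZ : Good (fun _ => True) ZZ.
Proof. unfold ZZ. gbase. Qed.
Lemma gCC : Good (fun _ => True) CC.
Proof. unfold CC, ZZ. gbase. Qed.
Lemma gXX : Good (fun _ => True) XX.
Proof. unfold XX, CC, ZZ. gbase. Qed.
Lemma XX_nonneg p : 0 <= XX p.
Proof. unfold XX, CC, ZZ. assert (0 <= co 0 p * co 0 p + co 1 p * co 1 p) by nra.
  assert (0 <= co 2 p * co 2 p + co 3 p * co 3 p) by nra. apply Rmult_le_pos; [apply Rmult_le_pos|]; lra. Qed.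
Lemma CC_pos p : 0 < CC p.
Proof. unfold CC, ZZ. nra. Qed.
Lemma XX_gt p : True -> - t^4 / 2 < XX p.
Proof. intros. generalize (XX_nonneg p) (t4_pos t Ht). lra. Qed.

Lemma gA : Good (fun _ => True) (fun p => Af M t (XX p)).
Proof. apply G_comp with (- t^4 / 2). apply Af_Lc; auto. apply gXX. apply XX_gt. Qed.
Lemma gA1 : Good (fun _ => True) (fun p => A1f S1 M t (XX p)).
Proof. apply G_comp with (- t^4 / 2). apply A1f_Lc; auto. apply gXX. apply XX_gt. Qed.
Lemma gsqA : Good (fun _ => True) (fun p => sqrt (Af M t (XX p))).
Proof. apply (G_comp _ (- t^4 / 2) (fun X => sqrt (Af M t X))). apply sqAf_Lc; auto. apply gXX. apply XX_gt. Qed.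
Lemma gisqA : Good (fun _ => True) (fun p => / sqrt (Af M t (XX p))).
Proof. apply (G_comp _ (- t^4 / 2) (fun X => / sqrt (Af M t X))). apply isqAf_Lc; auto. apply gXX. apply XX_gt. Qed.
Lemma giCC : Good (fun _ => True) (fun p => / CC p).
Proof. apply (G_comp _ 0 (fun y => / y)). apply Lc_inv. apply Lc_id. auto. apply gCC. intros; apply CC_pos. Qed.

Ltac gtac := repeat (first [apply gZZ | apply gCC | apply gXX | apply gA | apply gA1 | apply gsqA | apply gisqA
   | apply giCC | apply G_plus | apply G_mult | apply G_const | apply G_co]).

Lemma sqA_pos p : 0 < sqrt (Af M t (XX p)).
Proof. apply sqrt_lt_R0. apply Af_pos; auto. apply XX_gt; auto. Qed.

Lemma Gc_smooth a b : (a < 2)%nat -> (b < 2)%nat -> smoothC_on (fun _ => True) (fun p => Gc S1 M t p a b).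
Proof.
  intros Ha Hb. split.
  - destruct a as [|[|]]; destruct b as [|[|]]; try lia.
    + apply smooth_ext with (fun p => sqrt (Af M t (XX p)) * / CC p + ZZ p * (XX p * A1f S1 M t (XX p) + (-1) * Af M t (XX p)) * (/ CC p * / CC p) * / sqrt (Af M t (XX p))).
      apply shift_open_True. intros p _. unfold Gc. simpl. generalize (CC_pos p) (sqA_pos p); intros. field. lra.
      apply smooth_good. apply shift_open_True. gtac.
    + apply smooth_ext with (fun p => (CC p * A1f S1 M t (XX p) * / 2 * / sqrt (Af M t (XX p))) * (co 0 p * co 2 p + co 1 p * co 3 p)).
      apply shift_open_True. intros p _. unfold Gc, Gr, co. destruct p as [[x1 y1] [x2 y2]]. simpl. ring.
      apply smooth_good. apply shift_open_True. gtac.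
    + apply smooth_ext with (fun p => (CC p * A1f S1 M t (XX p) * / 2 * / sqrt (Af M t (XX p))) * (co 0 p * co 2 p + co 1 p * co 3 p)).
      apply shift_open_True. intros p _. unfold Gc, Gr, co. destruct p as [[x1 y1] [x2 y2]]. simpl. ring.
      apply smooth_good. apply shift_open_True. gtac.
    + apply smooth_ext with (fun p => CC p * CC p * A1f S1 M t (XX p) * / 4 * / sqrt (Af M t (XX p))).
      apply shift_open_True. intros p _. unfold Gc. simpl. reflexivity.
      apply smooth_good. apply shift_open_True. gtac.
  - destruct a as [|[|]]; destruct b as [|[|]]; try lia.
    + apply smooth_ext with (fun p => 0).
      apply shift_open_True. intros p _. unfold Gc. simpl. reflexivity.
      apply smooth_good. apply shift_open_True. gtac.
    + apply smooth_ext with (fun p => (CC p * A1f S1 M t (XX p) * / 2 * / sqrt (Af M t (XX p))) * (co 0 p * co 3 p + (-1) * (co 1 p * co 2 p))).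
      apply shift_open_True. intros p _. unfold Gc, Gr, co. destruct p as [[x1 y1] [x2 y2]]. simpl. ring.
      apply smooth_good. apply shift_open_True. gtac.
    + apply smooth_ext with (fun p => (CC p * A1f S1 M t (XX p) * / 2 * / sqrt (Af M t (XX p))) * (co 1 p * co 2 p + (-1) * (co 0 p * co 3 p))).
      apply shift_open_True. intros p _. unfold Gc, Gr, co. destruct p as [[x1 y1] [x2 y2]]. simpl. ring.
      apply smooth_good. apply shift_open_True. gtac.
    + apply smooth_ext with (fun p => 0).
      apply shift_open_True. intros p _. unfold Gc. simpl. reflexivity.
      apply smooth_good. apply shift_open_True. gtac.
Qed.

Lemma Gc_pos z : posdef (Gc S1 M t (z, RtoC 0)).
Proof.
  destruct z as [zp zq].
  assert (EX : XX (@pair C C (zp, zq) (RtoC 0)) = 0) by (unfold XX, co, RtoC; simpl; ring).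
  destruct (Af0 S1 M t HZ1 HM1 Ht) as [EA EA1].
  assert (ES : sqrt (t^4) = t^2).
  { replace (t^4) with ((t^2)^2) by ring. apply sqrt_pow2. nra. }
  assert (Ht2 : 0 < t^2) by nra.
  intros [a0 b0] [a1 b1] Hv.
  assert (HN : 0 < a0*a0 + b0*b0 + a1*a1 + b1*b1).
  { apply (nonzero2_s2 ((a0,b0),(a1,b1))) in Hv. unfold s2, co in Hv; simpl in Hv. lra. }
  unfold quad, Gc, Gr. rewrite EX, EA, EA1, ES.
  generalize (CC_pos (@pair C C (zp, zq) (RtoC 0))). intro HC.
  set (c := CC (@pair C C (zp, zq) (RtoC 0))) in *.
  assert (Ec : ZZ (@pair C C (zp, zq) (RtoC 0)) = c - 1) by (unfold c, CC; ring).
  rewrite Ec. unfold RtoC, Cmult, Cplus, Cconj; simpl.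
  match goal with |- 0 < ?X => replace X with ((a0*a0+b0*b0) * (t^2 / (c*c)) + (a1*a1+b1*b1) * (c*c/(4*t^2))) end.
  2: { field. split; lra. }
  assert (0 < t^2/(c*c)) by (apply Rdiv_lt_0_compat; nra).
  assert (0 < c*c/(4*t^2)) by (apply Rdiv_lt_0_compat; nra).
  set (X := t^2/(c*c)) in *. set (Y := c*c/(4*t^2)) in *.
  assert (0 <= a0*a0+b0*b0) by nra. assert (0 <= a1*a1+b1*b1) by nra.
  destruct (Rlt_dec 0 (a0*a0+b0*b0)).
  - assert (0 < (a0*a0+b0*b0) * X) by (apply Rmult_lt_0_compat; lra).
    assert (0 <= (a1*a1+b1*b1) * Y) by (apply Rmult_le_pos; lra). lra.
  - assert (0 < (a1*a1+b1*b1) * Y) by (apply Rmult_lt_0_compat; lra).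
    assert (0 <= (a0*a0+b0*b0) * X) by (apply Rmult_le_pos; lra). lra.
Qed.
End Chart2.

Ltac gbase2 := repeat (first [apply G_plus | apply G_mult | apply G_const | apply G_co]).

Lemma gs2 V : Good V s2.
Proof. unfold s2. gbase2. Qed.

Lemma hform_smooth (q1 q2 : R -> R) : Lc 0 q1 -> Lc 0 q2 -> forall j k, (j < 2)%nat -> (k < 2)%nat ->
  smoothC_on nonzero2 (fun w => hform q1 q2 w j k).
Proof.
  intros L1 L2 j k Hj Hk. split.
  - apply smooth_ext with (fun w => dl j k * q1 (s2 w) + q2 (s2 w) * Rq j k w).
    apply shift_open_nonzero. intros. symmetry. apply hform_Re; auto.
    apply smooth_good. apply shift_open_nonzero.
    apply G_plus. apply G_mult. apply G_const. apply G_comp with 0; auto. apply gs2.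
    intros; apply nonzero2_s2; auto.
    apply G_mult. apply G_comp with 0; auto. apply gs2. intros; apply nonzero2_s2; auto.
    unfold Rq. gbase2.
  - apply smooth_ext with (fun w => 0 * q1 (s2 w) + q2 (s2 w) * (co (2*j) w * co (2*k+1) w + (-1) * (co (2*j+1) w * co (2*k) w))).
    apply shift_open_nonzero. intros. rewrite hform_Im; auto. unfold Iq. ring.
    apply smooth_good. apply shift_open_nonzero.
    apply G_plus. apply G_mult. apply G_const. apply G_comp with 0; auto. apply gs2.
    intros; apply nonzero2_s2; auto.
    apply G_mult. apply G_comp with 0; auto. apply gs2. intros; apply nonzero2_s2; auto.
    gbase2.
Qed.

Lemma pow4_lt x y : 0 <= x -> 0 <= y -> x^4 < y^4 -> x < y.
Proof.
  intros Hx Hy H. destruct (Rlt_dec x y); auto. exfalso.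
  assert (y^4 <= x^4) by (apply pow_incr; lra). lra.
Qed.

Lemma ssq4 x : 0 <= x -> sqrt (sqrt x) ^ 4 = x.
Proof.
  intro. replace (sqrt (sqrt x) ^ 4) with ((sqrt (sqrt x) * sqrt (sqrt x)) * (sqrt (sqrt x) * sqrt (sqrt x))) by ring.
  rewrite sqrt_sqrt by (apply sqrt_pos). apply sqrt_sqrt; auto.
Qed.

Lemma gcont_open (f : C2 -> R) (thr : R) : Good (fun _ => True) f -> is_open2 (fun w => thr < f w).
Proof.
  intros G w Hw. destruct (Good_cont _ f G w I (f w - thr) ltac:(lra)) as [d [Hd H]].
  exists d. split; auto. intros w' Hw'. specialize (H w' I Hw').
  apply Rabs_def2 in H. lra.
Qed.

Theorem proposition6p3 :
  exists (Rr ups : R), 0 < Rr /\ 0 < ups < 1 /\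
  forall t : R, 0 < t ->
  exists hc : form11,
    closed_real_pos_11_form hc /\
    (* (1) *)
    (forall w, nonzero2 w -> r_of w <= t * Rr / 2 -> form_eq_at hc (omega_tilde t) w) /\
    (* (2) *)
    (exists V : C2 -> Prop, is_open2 V /\
       (forall w, t * Rr <= r_of w -> V w) /\
       (forall w, V w -> nonzero2 w -> form_eq_at hc omega_hat w)) /\
    (* (3) *)
    (forall w, nonzero2 w -> 2 * ups ^ 2 <= wedge_sq_coeff hc w) /\
    (exists rt, t * Rr / 2 < rt < t * Rr /\
       forall w, r_of w = rt -> wedge_sq_coeff hc w = 2 * ups ^ 2).
Proof.
  destruct S_pack as [S1 [M [ym [HL1 [HD1 [HZ1 [HZ2 [HMx [Hym [HSm HM1]]]]]]]]]].
  set (K := Kc M).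
  assert (HK : K = 2 * M + 4) by reflexivity.
  assert (HKp : 0 < K) by lra.
  exists (sqrt (sqrt K)), (/ sqrt (M + 1)).
  assert (HR : 0 < sqrt (sqrt K)) by (apply sqrt_lt_R0, sqrt_lt_R0; auto).
  assert (HsM : 1 < sqrt (M + 1)).
  { rewrite <- sqrt_1 at 1. apply sqrt_lt_1_alt. lra. }
  assert (Hups2 : (/ sqrt (M + 1)) ^ 2 = / (M + 1)).
  { rewrite pow_inv. f_equal. rewrite <- Rsqr_pow2. apply Rsqr_sqrt. lra. }
  split; [auto|]. split.
  { split. apply Rinv_0_lt_compat; lra. assert (Hi : / sqrt (M + 1) < / 1) by (apply Rinv_lt_contravar; lra). rewrite Rinv_1 in Hi. exact Hi. }
  intros t Ht.
  destruct (Lc_deriv 0 (p2 S1 M t) (p2_Lc S1 M t HL1 HM1 Ht)) as [p3 [_ Hp3]].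
  assert (Hp1d : forall s, 0 < s -> is_derive (p1 M t) s (p2 S1 M t s)).
  { intros; apply p1_deriv; auto. }
  assert (HK4 : sqrt (sqrt K) ^ 4 = K) by (apply ssq4; lra).
  assert (HR2 : sqrt (sqrt K) ^ 2 = sqrt K) by (rewrite <- Rsqr_pow2; apply Rsqr_sqrt; apply sqrt_pos).
  assert (Hr2 : forall w, r_of w ^ 2 = s2 w) by (intro; rewrite r_of_s2; rewrite <- Rsqr_pow2; apply Rsqr_sqrt, s2_nonneg).
  assert (Ht4 := t4_pos t Ht).
  exists (hform (p1 M t) (p2 S1 M t)).
  split; [|split; [|split; [|split]]].
  -
    split; [|split; [|split; [|split; [|split]]]].
    + intros w Hw j k Hj Hk. apply hform_neg; auto.
    + intros j k Hj Hk. apply hform_smooth; auto. apply p1_Lc; auto. apply p2_Lc; auto.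
    + intros w Hw. apply hform_herm.
    + intros w Hw j k l Hj Hk Hl. apply (hform_closed _ _ p3); auto. apply nonzero2_s2; auto.
    + intros w Hw. apply nonzero2_s2 in Hw. apply hform_posdef; auto.
      apply p1_pos; auto. apply p12_pos; auto.
    + intros c. exists (Gc S1 M t). split; [|split].
      * intros a b Ha Hb. apply Gc_smooth; auto.
      * intros z s Hs a b Ha Hb. apply Gc_pull; auto.
      * intros z. apply Gc_pos; auto.
  -
    intros w Hw Hr j k Hj Hk. apply nonzero2_s2 in Hw.
    rewrite omega_tilde_eq; auto.
    assert (Hs : s2 w * s2 w <= t^4 * Kc M / 16).
    { assert (0 <= r_of w) by (rewrite r_of_s2; apply sqrt_pos).
      assert (r_of w ^ 4 <= (t * sqrt (sqrt K) / 2) ^ 4) by (apply pow_incr; split; auto).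
      replace (s2 w * s2 w) with (r_of w ^ 4) by (rewrite <- Hr2; ring).
      replace (t^4 * Kc M / 16) with ((t * sqrt (sqrt K) / 2) ^ 4). auto.
      replace ((t * sqrt (sqrt K) / 2) ^ 4) with (t^4 * sqrt (sqrt K) ^ 4 / 16) by field.
      rewrite HK4. reflexivity. }
    destruct (low_region S1 M t HZ1 HM1 Ht (s2 w) Hw Hs) as [E1 E2].
    unfold hform. rewrite E1, E2. reflexivity.
  -
    exists (fun w => t^4 * (cc0 M + Lc0 M) < s2 w * s2 w). split; [|split].
    + apply gcont_open. apply G_mult; apply gs2.
    + intros w Hw.
      assert (0 <= t * sqrt (sqrt K)) by nra.
      assert ((t * sqrt (sqrt K)) ^ 4 <= r_of w ^ 4) by (apply pow_incr; split; auto).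
      replace (s2 w * s2 w) with (r_of w ^ 4) by (rewrite <- Hr2; ring).
      replace ((t * sqrt (sqrt K)) ^ 4) with (t^4 * sqrt (sqrt K) ^ 4) in H0 by ring. rewrite HK4 in H0.
      unfold cc0, Lc0. fold K. rewrite HK in *. nra.
    + intros w Hw Hnz. apply nonzero2_s2 in Hnz.
      destruct (high_region S1 M t HZ2 HM1 Ht (s2 w) Hnz Hw) as [E1 E2].
      apply hform_hat; auto.
  -
    intros w Hw. apply nonzero2_s2 in Hw. rewrite hform_wedge.
    rewrite wedge_id; auto. rewrite Hups2.
    generalize (A1f_ge S1 M t HMx HM1 Ht (s2 w * s2 w) (sq_gt t Ht _ Hw)). lra.
  -
    set (Y := cc0 M + Lc0 M * ym).
    assert (HY1 : K / 16 < Y) by (unfold Y, cc0, Lc0; fold K; nra).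
    assert (HY2 : Y < K) by (unfold Y, cc0, Lc0; fold K; rewrite HK; nra).
    exists (t * sqrt (sqrt Y)).
    assert (HYs : 0 < sqrt (sqrt Y)) by (apply sqrt_lt_R0, sqrt_lt_R0; lra).
    assert (HY4 : sqrt (sqrt Y) ^ 4 = Y) by (apply ssq4; lra).
    split. split.
    + apply Rmult_lt_reg_r with (/ t). apply Rinv_0_lt_compat; auto.
      replace (t * sqrt (sqrt K) / 2 * / t) with (sqrt (sqrt K) / 2) by (field; lra).
      replace (t * sqrt (sqrt Y) * / t) with (sqrt (sqrt Y)) by (field; lra).
      apply pow4_lt. lra. lra.
      replace ((sqrt (sqrt K) / 2) ^ 4) with (sqrt (sqrt K) ^ 4 / 16) by field. lra.
    + apply Rmult_lt_compat_l; auto. apply pow4_lt. lra. lra. lra.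
    + intros w Hw.
      assert (Hs : s2 w * s2 w = t^4 * Y).
      { rewrite <- Hr2. rewrite Hw. replace ((t * sqrt (sqrt Y)) ^ 2 * (t * sqrt (sqrt Y)) ^ 2) with (t^4 * sqrt (sqrt Y) ^ 4) by ring.
        rewrite HY4. reflexivity. }
      assert (Hpos : 0 < s2 w).
      { rewrite <- Hr2, Hw. apply pow_lt. nra. }
      rewrite hform_wedge. rewrite wedge_id; auto. rewrite Hups2, Hs.
      unfold A1f. assert (Ey : yarg M t (t^4 * Y) = ym).
      { assert (HYd : Y = cc0 M + Lc0 M * ym) by reflexivity. unfold yarg. replace (t^4 * Y / t^4) with Y by (field; lra). rewrite HYd. unfold Lc0. field. lra. }
      rewrite Ey, HSm. unfold Lc0. field. lra.
Qed.
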